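(* Fix $\mu\in(0,\mu_0]$ and suppose there are constants $p\ge0$, $\rho>0$ with $|f(\xi)-f'(0)\xi|\le p|\xi|^2$ for all $|\xi|\le\rho$, and that $\mu\sup_{t\ge0}|\Delta\tilde\varphi(t)|<\frac{1}{8h_{\max}(\mu)}$ and $\mu(|\Delta\tilde\beta|\mu+|\Delta\alpha|)<\frac{1}{8h_{\max}(\mu)}$. Then the zero solution of $$\bar y''+(\alpha+\Delta\alpha)\mu\bar y'+\big((\beta+\Delta\beta)\mu^2+\mu(\varphi(t)+\Delta\varphi(t))\big)f(\bar y)=0$$ is asymptotically stable.
   Context: Let $T>0$, $\alpha>0$, $\beta>0$ be constants, $\varphi:\mathbb{R}\to\mathbb{R}$ a continuous $T$-periodic function with $\int_0^T\varphi(s)\,ds=0$, and $f:\mathbb{R}\to\mathbb{R}$ a smooth function with $f(0)=0$ and $f'(0)<0$. Put $\tilde\beta=\beta f'(0)$, $\tilde\varphi(t)=\varphi(t)f'(0)$, and assume $$\frac{1}{T}\int_0^T\Big(\int_0^\tau\tilde\varphi(s)\,ds\Big)^2d\tau>\Big(\frac{1}{T}\int_0^T\tau\,\tilde\varphi(\tau)\,d\tau\Big)^2-\tilde\beta .$$ For $\mu>0$ let $\tilde A(t,\mu)=\begin{pmatrix}0&1\\-\tilde\beta\mu^2-\mu\tilde\varphi(t)&-\alpha\mu\end{pmatrix}$. Let $\mu_0>0$ be a number such that the zero solution of the linear equation $y''+\alpha\mu y'+(\tilde\beta\mu^2+\mu\tilde\varphi(t))y=0$ is asymptotically stable for every $\mu\in(0,\mu_0]$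 (such a number exists). For fixed $\mu\in(0,\mu_0]$ let $H(t,\mu)$ be a Hermitian solution of $\frac{d}{dt}H+H\tilde A(t,\mu)+\tilde A^*(t,\mu)H=-I$ on $[0,T]$ with $H(0,\mu)=H(T,\mu)>0$, extended $T$-periodically to $[0,\infty)$; $h_{\max}(\mu)=\max_{0\le t\le T}\|H(t,\mu)\|$. The perturbations are real constants $\Delta\alpha,\Delta\beta$ and a bounded continuous function $\Delta\varphi$ on $[0,\infty)$; set $\Delta\tilde\beta=\Delta\beta\,f'(0)$, $\Delta\tilde\varphi(t)=\Delta\varphi(t)f'(0)$. $\|\cdot\|$ is the Euclidean norm / spectral matrix norm. Asymptotic stability is in the Lyapunov sense for the equivalent first-order system in $(\bar y,\bar y')$. *)

(* Defs.v *)
From Stdlib Require Import Reals Lra.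
From Coquelicot Require Export Coquelicot.
Open Scope R_scope.

Record M2 := mkM2 { m11 : C; m12 : C; m21 : C; m22 : C }.

Definition Madd (A B : M2) : M2 :=
  mkM2 (Cplus (m11 A) (m11 B)) (Cplus (m12 A) (m12 B))
       (Cplus (m21 A) (m21 B)) (Cplus (m22 A) (m22 B)).
Definition Mopp (A : M2) : M2 :=
  mkM2 (Copp (m11 A)) (Copp (m12 A)) (Copp (m21 A)) (Copp (m22 A)).
Definition Mmul (A B : M2) : M2 :=
  mkM2 (Cplus (Cmult (m11 A) (m11 B)) (Cmult (m12 A) (m21 B)))
       (Cplus (Cmult (m11 A) (m12 B)) (Cmult (m12 A) (m22 B)))
       (Cplus (Cmult (m21 A) (m11 B)) (Cmult (m22 A) (m21 B)))
       (Cplus (Cmult (m21 A) (m12 B)) (Cmult (m22 A) (m22 B))).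
Definition Madj (A : M2) : M2 :=
  mkM2 (Cconj (m11 A)) (Cconj (m21 A)) (Cconj (m12 A)) (Cconj (m22 A)).
Definition MI : M2 := mkM2 (RtoC 1) (RtoC 0) (RtoC 0) (RtoC 1).

Definition Mvec (A : M2) (z : C * C) : C * C :=
  (Cplus (Cmult (m11 A) (fst z)) (Cmult (m12 A) (snd z)),
   Cplus (Cmult (m21 A) (fst z)) (Cmult (m22 A) (snd z))).

Definition vnorm (z : C * C) : R := sqrt (Cmod (fst z) ^ 2 + Cmod (snd z) ^ 2).

Definition opnorm (A : M2) : R :=
  real (Lub_Rbar (fun r => exists z, vnorm z = 1 /\ r = vnorm (Mvec A z))).

Definition hermitian (A : M2) : Prop := Madj A = A.

Definition posdef (A : M2) : Prop :=
  hermitian A /\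
  forall z : C * C, z <> (RtoC 0, RtoC 0) ->
    0 < Re (Cplus (Cmult (Cconj (fst z)) (fst (Mvec A z)))
                  (Cmult (Cconj (snd z)) (snd (Mvec A z)))).

Definition C_derive (h : R -> C) (t : R) (d : C) : Prop :=
  is_derive (fun s => Re (h s)) t (Re d) /\ is_derive (fun s => Im (h s)) t (Im d).
Definition M_derive (H : R -> M2) (t : R) (D : M2) : Prop :=
  C_derive (fun s => m11 (H s)) t (m11 D) /\ C_derive (fun s => m12 (H s)) t (m12 D) /\
  C_derive (fun s => m21 (H s)) t (m21 D) /\ C_derive (fun s => m22 (H s)) t (m22 D).

(* btil = beta f'(0), phitil t = phi t * f'(0) *)
Definition Atil (alpha btil : R) (phitil : R -> R) (mu t : R) : M2 :=
  mkM2 (RtoC 0) (RtoC 1) (RtoC (- btil * mu ^ 2 - mu * phitil t)) (RtoC (- alpha * mu)).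

Definition lyap_periodic_sol (T alpha btil : R) (phitil : R -> R) (mu : R)
    (H : R -> M2) : Prop :=
  (forall t, 0 <= t <= T ->
     hermitian (H t) /\
     M_derive H t (Madd (Mopp MI)
                   (Mopp (Madd (Mmul (H t) (Atil alpha btil phitil mu t))
                               (Mmul (Madj (Atil alpha btil phitil mu t)) (H t)))))) /\
  H 0 = H T /\ posdef (H 0).

(* h_max = max_{0<=t<=T} ||H(t)|| (the max is attained, so it equals the sup) *)
Definition hmax (T : R) (H : R -> M2) : R :=
  real (Lub_Rbar (fun r => exists t, 0 <= t <= T /\ r = opnorm (H t))).

Definition is_sol (a : R) (q g : R -> R) (t0 : R) (t1 : Rbar) (y v : R -> R) : Prop :=
  forall t, t0 <= t -> Rbar_lt t t1 ->
    is_derive y t (v t) /\ is_derive v t (- a * v t - q t * g (y t)).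

Definition snorm (y v : R) : R := sqrt (y ^ 2 + v ^ 2).

Definition zero_stable (a : R) (q g : R -> R) : Prop :=
  forall t0, 0 <= t0 -> forall eps, 0 < eps -> exists delta, 0 < delta /\
    (forall y0 v0, snorm y0 v0 < delta ->
       exists y v, is_sol a q g t0 p_infty y v /\ y t0 = y0 /\ v t0 = v0) /\
    (forall (t1 : Rbar) y v, is_sol a q g t0 t1 y v -> snorm (y t0) (v t0) < delta ->
       forall t, t0 <= t -> Rbar_lt t t1 -> snorm (y t) (v t) < eps).

Definition zero_attractive (a : R) (q g : R -> R) : Prop :=
  forall t0, 0 <= t0 -> exists delta, 0 < delta /\
    forall y v, is_sol a q g t0 p_infty y v -> snorm (y t0) (v t0) < delta ->
      is_lim (fun t => snorm (y t) (v t)) p_infty 0.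

Definition zero_asympt_stable (a : R) (q g : R -> R) : Prop :=
  zero_stable a q g /\ zero_attractive a q g.

(* Main.v *)
Require Import Defs.
From Stdlib Require Import Reals Lra Lia ZArith.
From Coquelicot Require Import Coquelicot.
Open Scope R_scope.

Lemma lub_ub (E : R -> Prop) x : E x -> (exists B, forall y, E y -> y <= B) ->
  x <= real (Lub_Rbar E).
Proof.
  intros Ex [B HB]. destruct (Lub_Rbar_correct E) as [Hub Hl].
  destruct (Lub_Rbar E) eqn:Hq.
  - exact (Hub x Ex).
  - exfalso. specialize (Hl (Finite B)). assert (is_ub_Rbar E B) by (intros y Ey; exact (HB y Ey)).
    specialize (Hl H). exact Hl.
  - exfalso. exact (Hub x Ex).
Qed.

Lemma lub_ub_or (E : R -> Prop) x : E x ->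
  x <= real (Lub_Rbar E) \/ real (Lub_Rbar E) = 0.
Proof.
  intros Ex. destruct (Lub_Rbar_correct E) as [Hub Hl].
  destruct (Lub_Rbar E) eqn:Hq.
  - left; exact (Hub x Ex).
  - right; reflexivity.
  - exfalso. exact (Hub x Ex).
Qed.

Lemma ballR (x : R) (e : posreal) (y : R) : ball x e y -> Rabs (y - x) < e.
Proof. intros H; exact H. Qed.
Lemma ballR' (x : R) (e : posreal) (y : R) : Rabs (y - x) < e -> ball x e y.
Proof. intros H; exact H. Qed.

Lemma cont_near (g : R -> R) x eps : continuity_pt g x -> 0 < eps ->
  exists d, 0 < d /\ forall y, Rabs (y - x) < d -> Rabs (g y - g x) < eps.
Proof.
  intros Hc He. destruct (proj1 (continuity_pt_locally g x) Hc (mkposreal _ He)) as [d Hd].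
  exists d. split. apply cond_pos. intros y Hy. apply (Hd y). apply ballR'. exact Hy.
Qed.

Lemma cont_ind (g dg : R -> R) (a b B : R):
  a <= b ->
  (forall x, a <= x <= b -> continuity_pt g x) ->
  (forall x, a < x < b -> is_derive g x (dg x)) ->
  (forall x, a < x < b -> g x < B -> dg x <= 0) ->
  g a < B -> g b <= g a.
Proof.
  intros Hab Hc Hd Hn Ha.
  destruct (Rle_lt_dec (g b) (g a)) as [|Hlt]; [assumption|exfalso].
  set (l := (g a + Rmin (g b) B)/2).
  assert (Hm1 := Rmin_l (g b) B). assert (Hm2 := Rmin_r (g b) B).
  assert (Hm3 : g a < Rmin (g b) B) by (apply Rmin_glb_lt; lra).
  assert (Hl1 : g a < l) by (unfold l; lra).
  assert (Hl2 : l < g b) by (unfold l; lra).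
  assert (Hl3 : l < B) by (unfold l; lra).
  set (E := fun s => a <= s <= b /\ forall u, a <= u <= s -> g u < l).
  assert (HbE : bound E) by (exists b; intros s [[_ ?] _]; lra).
  assert (HnE : exists x, E x).
  { exists a; split; [lra|]. intros u Hu. replace u with a by lra. lra. }
  destruct (completeness E HbE HnE) as [sg [Hub Hlub]].
  assert (Has : a <= sg).
  { apply Hub. split; [lra|]. intros u Hu. replace u with a by lra. lra. }
  assert (Hsb : sg <= b) by (apply Hlub; intros s [[_ ?] _]; lra).
  assert (Hbelow : forall u, a <= u < sg -> g u < l).
  { intros u Hu. destruct (Rlt_le_dec (g u) l) as [ok|Hge]; auto. exfalso.
    assert (Hu' : is_upper_bound E u).
    { intros s [Hs Hs2]. destruct (Rle_lt_dec s u) as [ok|Hsu]; auto.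
      specialize (Hs2 u ltac:(lra)). lra. }
    apply Hlub in Hu'. lra. }
  assert (Hge : l <= g sg).
  { destruct (Rle_lt_dec l (g sg)) as [ok|Hlt2]; auto. exfalso.
    destruct (Req_dec sg b) as [Heq|Hneq].
    { rewrite Heq in Hlt2. lra. }
    destruct (cont_near g sg (l - g sg) (Hc sg ltac:(lra)) ltac:(lra)) as [d [Hd0 Hdd]].
    assert (Hs'1 := Rmin_l b (sg + d/2)). assert (Hs'2 := Rmin_r b (sg + d/2)).
    set (s' := Rmin b (sg + d/2)) in *.
    assert (Hs'3 : sg < s') by (apply Rmin_glb_lt; lra).
    assert (E s').
    { split; [lra|]. intros u Hu. destruct (Rlt_le_dec u sg) as [Hus|Hus].
      - apply Hbelow; lra.
      - assert (Rabs (u - sg) < d) by (rewrite Rabs_pos_eq; lra).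
        specialize (Hdd u H). apply Rabs_lt_between in Hdd. lra. }
    apply Hub in H. lra. }
  assert (Hle : g sg <= l).
  { destruct (Rle_lt_dec (g sg) l) as [ok|Hlt2]; auto. exfalso.
    destruct (Req_dec sg a) as [Heq|Hneq].
    { rewrite Heq in Hlt2. lra. }
    destruct (cont_near g sg (g sg - l) (Hc sg ltac:(lra)) ltac:(lra)) as [d [Hd0 Hdd]].
    assert (Hu1 := Rmax_l a (sg - d/2)). assert (Hu2 := Rmax_r a (sg - d/2)).
    set (u := Rmax a (sg - d/2)) in *.
    assert (Hu3 : u < sg) by (apply Rmax_lub_lt; lra).
    assert (Rabs (u - sg) < d).
    { rewrite Rabs_left by lra. lra. }
    specialize (Hdd u H). apply Rabs_lt_between in Hdd.
    specialize (Hbelow u ltac:(lra)). lra. }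
  assert (Hsa : a < sg).
  { destruct (Req_dec sg a) as [Heq|]; [|lra]. rewrite Heq in Hge. lra. }
  set (df := fun x => if Rlt_dec a x then if Rlt_dec x sg then dg x else 0 else 0).
  destruct (MVT_gen g a sg df) as [c [Hc1 Hc2]].
  - rewrite Rmin_left, Rmax_right by lra. intros x Hx. unfold df.
    destruct (Rlt_dec a x); [|lra]. destruct (Rlt_dec x sg); [|lra].
    apply Hd. lra.
  - rewrite Rmin_left, Rmax_right by lra. intros x Hx. apply Hc. lra.
  - assert (df c <= 0).
    { unfold df. destruct (Rlt_dec a c); [|lra]. destruct (Rlt_dec c sg); [|lra].
      apply Hn. lra. specialize (Hbelow c ltac:(lra)). lra. }
    assert (df c * (sg - a) <= 0) by nra.
    lra.
Qed.

Lemma glue (f1 f2 g : R -> R) s l d : 0 < d -> is_derive f1 s l -> is_derive f2 s l ->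
  g s = f1 s -> f1 s = f2 s -> (forall u, s <= u < s + d -> g u = f1 u) ->
  (forall u, s - d < u < s -> g u = f2 u) -> is_derive g s l.
Proof.
  intros Hd H1 H2 Hgs H12 Hg1 Hg2. rewrite is_derive_Reals in *.
  intros eps Heps. destruct (H1 eps Heps) as [d1 Hd1]. destruct (H2 eps Heps) as [d2 Hd2].
  assert (Hpos : 0 < Rmin d (Rmin d1 d2)).
  { apply Rmin_glb_lt; [lra|apply Rmin_glb_lt; apply cond_pos]. }
  exists (mkposreal _ Hpos). intros h Hh0 Hh. simpl in Hh.
  assert (Hm1 := Rmin_l d (Rmin d1 d2)). assert (Hm2 := Rmin_r d (Rmin d1 d2)).
  assert (Hm3 := Rmin_l d1 d2). assert (Hm4 := Rmin_r d1 d2).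
  destruct (Rlt_dec 0 h) as [Hp|Hn].
  - rewrite Rabs_pos_eq in Hh by lra.
    rewrite (Hg1 (s + h)) by lra. rewrite Hgs. apply Hd1; auto.
    rewrite Rabs_pos_eq; lra.
  - assert (h < 0) by lra. rewrite Rabs_left in Hh by lra.
    rewrite (Hg2 (s + h)) by lra. rewrite Hgs, H12. apply Hd2; auto.
    rewrite Rabs_left; lra.
Qed.

Definition md (T s : R) := s - T * IZR (Int_part (s / T)).

Lemma md_spec T s : 0 < T -> 0 <= md T s < T.
Proof.
  intros HT. unfold md. destruct (base_Int_part (s / T)) as [H1 H2].
  set (k := IZR (Int_part (s / T))) in *.
  assert (Hs : s = T * (s / T)) by (field; lra).
  split; nra.
Qed.

Lemma md_eq T s (k : Z) : 0 < T -> T * IZR k <= s < T * IZR k + T -> md T s = s - T * IZR k.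
Proof.
  intros HT Hs. unfold md.
  assert (Hk : k = Int_part (s / T)).
  { apply Int_part_spec.
    assert (Hs' : s / T = IZR k + (s - T * IZR k) / T) by (field; lra).
    assert (0 <= (s - T * IZR k) / T) by (apply Rdiv_le_0_compat; lra).
    assert ((s - T * IZR k) / T < 1).
    { apply Rlt_div_l; lra. }
    lra. }
  rewrite <- Hk. reflexivity.
Qed.

Lemma per_nat (phi : R -> R) T : (forall t, phi (t + T) = phi t) ->
  forall n x, phi (x + INR n * T) = phi x.
Proof.
  intros Hp n. induction n as [|n IH]; intros x.
  - simpl. f_equal. ring.
  - rewrite S_INR. replace (x + (INR n + 1) * T) with ((x + INR n * T) + T) by ring.
    rewrite Hp. apply IH.
Qed.

Lemma per_Z (phi : R -> R) T : (forall t, phi (t + T) = phi t) ->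
  forall (n : Z) x, phi (x + IZR n * T) = phi x.
Proof.
  intros Hp n x. destruct n as [|p|p].
  - simpl. f_equal. ring.
  - rewrite <- positive_nat_Z, <- INR_IZR_INZ. apply per_nat; auto.
  - replace (IZR (Z.neg p)) with (- INR (Pos.to_nat p)).
    2:{ rewrite INR_IZR_INZ, positive_nat_Z. reflexivity. }
    rewrite <- (per_nat phi T Hp (Pos.to_nat p) (x + - INR (Pos.to_nat p) * T)).
    f_equal. ring.
Qed.

Lemma per_md (phi : R -> R) T : (forall t, phi (t + T) = phi t) ->
  forall s, phi (md T s) = phi s.
Proof.
  intros Hp s. unfold md.
  replace (s - T * IZR (Int_part (s / T))) with (s + IZR (- Int_part (s / T)) * T).
  apply per_Z; auto. rewrite opp_IZR. ring.
Qed.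

Lemma derive_shift (p : R -> R) dp x c : is_derive p (x - c) dp ->
  is_derive (fun u => p (u - c)) x dp.
Proof.
  intros H.
  assert (Hg : is_derive (fun u : R => u - c) x 1).
  { auto_derive; auto. }
  pose proof (is_derive_comp p (fun u => u - c) x dp 1 H Hg) as K.
  unfold scal in K; simpl in K; unfold mult in K; simpl in K; rewrite Rmult_1_l in K. exact K.
Qed.

Lemma per_ext T (p dp : R -> R) : 0 < T ->
  (forall t, 0 <= t <= T -> is_derive p t (dp t)) -> p 0 = p T -> dp 0 = dp T ->
  forall s, is_derive (fun u => p (md T u)) s (dp (md T s)).
Proof.
  intros HT Hd Hp0 Hdp0 s.
  set (k := Int_part (s / T)).
  assert (Hms : md T s = s - T * IZR k) by reflexivity.
  destruct (md_spec T s HT) as [Hr1 Hr2].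
  destruct (Req_dec (md T s) 0) as [Hz|Hnz].
  -
    rewrite Hz.
    apply (glue (fun u => p (u - T * IZR k)) (fun u => p (u - T * IZR (k - 1))) _ s (dp 0) T).
    + exact HT.
    + apply derive_shift. replace (s - T * IZR k) with 0 by lra. apply Hd; lra.
    + apply derive_shift. rewrite minus_IZR. replace (s - T * (IZR k - 1)) with T by lra.
      rewrite Hdp0. apply Hd; lra.
    + simpl. rewrite Hz. f_equal. lra.
    + rewrite minus_IZR. replace (s - T * IZR k) with 0 by lra.
      replace (s - T * (IZR k - 1)) with T by lra. exact Hp0.
    + intros u Hu. f_equal. apply md_eq; lra.
    + intros u Hu. f_equal. apply md_eq; auto. rewrite minus_IZR. lra.
  - assert (Hr : 0 < md T s) by lra.
    apply (is_derive_ext_loc (fun u => p (u - T * IZR k))).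
    + assert (Hpos : 0 < Rmin (md T s) (T - md T s)) by (apply Rmin_glb_lt; lra).
      exists (mkposreal _ Hpos). intros u Hu. apply ballR in Hu. simpl in Hu.
      assert (Hm1 := Rmin_l (md T s) (T - md T s)). assert (Hm2 := Rmin_r (md T s) (T - md T s)).
      apply Rabs_lt_between in Hu.
      f_equal. symmetry. apply md_eq; lra.
    + apply derive_shift. rewrite <- Hms. apply Hd; lra.
Qed.

Lemma cplus (f g : R -> R) x : continuous f x -> continuous g x -> continuous (fun t => f t + g t) x.
Proof. intros; exact (continuous_plus f g x H H0). Qed.
Lemma cmult (f g : R -> R) x : continuous f x -> continuous g x -> continuous (fun t => f t * g t) x.
Proof. intros; exact (@continuous_mult R_UniformSpace R_AbsRing f g x H H0). Qed.
Lemma copp (f : R -> R) x : continuous f x -> continuous (fun t => - f t) x.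
Proof. intros; exact (continuous_opp f x H). Qed.
Lemma cminus (f g : R -> R) x : continuous f x -> continuous g x -> continuous (fun t => f t - g t) x.
Proof. intros; apply cplus; auto; apply copp; auto. Qed.
Lemma cconst (c : R) x : continuous (fun _ : R => c) x.
Proof. apply continuous_const. Qed.
Lemma cid x : continuous (fun t : R => t) x.
Proof. apply continuous_id. Qed.
Lemma cabs (f : R -> R) x : continuous f x -> continuous (fun t => Rabs (f t)) x.
Proof. intros; apply continuous_Rabs_comp; auto. Qed.

Lemma cont_lip (g : R -> R) Lg : (forall x y, Rabs (g x - g y) <= Lg * Rabs (x - y)) ->
  forall x, continuous g x.
Proof.
  intros HL x. apply continuity_pt_filterlim. apply continuity_pt_locally.
  intros eps.
  assert (Hp : 0 < eps / (Rabs Lg + 1)).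
  { apply Rdiv_lt_0_compat. apply cond_pos. pose proof (Rabs_pos Lg); lra. }
  exists (mkposreal _ Hp). intros u Hu. apply ballR in Hu. simpl in Hu.
  pose proof (HL u x). pose proof (Rabs_pos Lg). pose proof (Rle_abs Lg).
  pose proof (Rabs_pos (u - x)). pose proof (cond_pos eps).
  assert (Rabs Lg * Rabs (u - x) <= Rabs Lg * (eps / (Rabs Lg + 1))) by nra.
  assert (Rabs Lg * (eps / (Rabs Lg + 1)) < eps).
  { apply (Rmult_lt_reg_r (Rabs Lg + 1)). lra. field_simplify; nra. }
  nra.
Qed.

Lemma ccomp (f g : R -> R) x : continuous f x -> continuous g (f x) -> continuous (fun t => g (f t)) x.
Proof. intros; exact (continuous_comp f g x H H0). Qed.

Lemma cder (f : R -> R) x : ex_derive f x -> continuous f x.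
Proof. intros H. exact (@ex_derive_continuous R_AbsRing R_NormedModule f x H). Qed.

Lemma exR (w : R -> R) a b : (forall s, continuous w s) -> ex_RInt w a b.
Proof. intros Hw. apply (@ex_RInt_continuous R_CompleteNormedModule). intros; apply Hw. Qed.

Lemma RInt_plusR (f g : R -> R) a b : ex_RInt f a b -> ex_RInt g a b ->
  RInt (fun x => f x + g x) a b = RInt f a b + RInt g a b.
Proof. intros. exact (RInt_plus f g a b H H0). Qed.
Lemma RInt_minusR (f g : R -> R) a b : ex_RInt f a b -> ex_RInt g a b ->
  RInt (fun x => f x - g x) a b = RInt f a b - RInt g a b.
Proof. intros. exact (RInt_minus f g a b H H0). Qed.
Lemma RInt_swapR (f : R -> R) a b : ex_RInt f a b -> RInt f b a = - RInt f a b.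
Proof. intros. rewrite <- (opp_RInt_swap f a b H). reflexivity. Qed.

Lemma der_int (w : R -> R) t0 c t : (forall s, continuous w s) ->
  is_derive (fun u => c + RInt w t0 u) t (w t).
Proof.
  intros Hw.
  assert (H : is_derive (fun u => RInt w t0 u) t (w t)).
  { apply (is_derive_RInt w (fun u => RInt w t0 u) t0 t).
    - apply filter_forall. intros b. apply (@RInt_correct R_CompleteNormedModule). apply exR; auto.
    - apply Hw. }
  pose proof (is_derive_plus (fun _ => c) (fun u => RInt w t0 u) t zero (w t) (is_derive_const c t) H) as K.
  rewrite plus_zero_l in K. exact K.
Qed.

Lemma int_le_abs (w1 w2 h : R -> R) a b : a <= b ->
  (forall s, continuous w1 s) -> (forall s, continuous w2 s) -> (forall s, continuous h s) ->
  (forall s, a <= s <= b -> Rabs (w1 s) + Rabs (w2 s) <= h s) ->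
  Rabs (RInt w1 a b) + Rabs (RInt w2 a b) <= RInt h a b.
Proof.
  intros Hab H1 H2 Hh Hb.
  assert (E1 := abs_RInt_le w1 a b Hab (exR w1 a b H1)).
  assert (E2 := abs_RInt_le w2 a b Hab (exR w2 a b H2)).
  assert (C1 : forall s, continuous (fun t => Rabs (w1 t)) s) by (intros; apply cabs; auto).
  assert (C2 : forall s, continuous (fun t => Rabs (w2 t)) s) by (intros; apply cabs; auto).
  assert (RInt (fun x => Rabs (w1 x) + Rabs (w2 x)) a b <= RInt h a b).
  { apply RInt_le; auto. apply exR; intros; apply cplus; auto. apply exR; auto.
    intros; apply Hb; lra. }
  rewrite (RInt_plusR _ _ a b (exR _ a b C1) (exR _ a b C2)) in H.
  eapply Rle_trans; [apply Rplus_le_compat; [exact E1|exact E2]| exact H].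
Qed.

Lemma int_pow_pos (C : R) m t0 t : t0 <= t ->
  RInt (fun s => C * (s - t0)^m) t0 t = C * (t - t0)^(S m) / INR (S m).
Proof.
  intros Ht. apply is_RInt_unique.
  assert (HS : INR (S m) <> 0) by (apply not_0_INR; lia).
  replace (C * (t - t0)^(S m) / INR (S m)) with
     (minus ((fun s => C * (s - t0)^(S m) / INR (S m)) t) ((fun s => C * (s - t0)^(S m) / INR (S m)) t0)).
  2:{ cbv beta. replace (t0 - t0) with 0 by ring. rewrite pow_i by lia. unfold minus, plus, opp; simpl. field. auto. }
  apply (@is_RInt_derive R_CompleteNormedModule (fun s => C * (s - t0)^(S m) / INR (S m)) (fun s => C * (s - t0)^m)).
  - intros x _. auto_derive; auto. change (match m with 0%nat => 1 | S _ => INR m + 1 end) with (INR (S m)). replace (x + - t0) with (x - t0) by ring. field. auto.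
  - intros x _. apply cder. auto_derive. auto.
Qed.

Lemma int_pow_neg (C : R) m t0 t : t <= t0 ->
  RInt (fun s => C * (t0 - s)^m) t t0 = C * (t0 - t)^(S m) / INR (S m).
Proof.
  intros Ht. apply is_RInt_unique.
  assert (HS : INR (S m) <> 0) by (apply not_0_INR; lia).
  replace (C * (t0 - t)^(S m) / INR (S m)) with
     (minus ((fun s => - C * (t0 - s)^(S m) / INR (S m)) t0) ((fun s => - C * (t0 - s)^(S m) / INR (S m)) t)).
  2:{ cbv beta. replace (t0 - t0) with 0 by ring. rewrite pow_i by lia. unfold minus, plus, opp; simpl. field. auto. }
  apply (@is_RInt_derive R_CompleteNormedModule (fun s => - C * (t0 - s)^(S m) / INR (S m)) (fun s => C * (t0 - s)^m)).
  - intros x _. auto_derive; auto. change (match m with 0%nat => 1 | S _ => INR m + 1 end) with (INR (S m)). replace (t0 + - x) with (t0 - x) by ring. field. auto.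
  - intros x _. apply cder. auto_derive. auto.
Qed.

Lemma IB (w1 w2 : R -> R) C m t0 t : 
  (forall s, continuous w1 s) -> (forall s, continuous w2 s) ->
  (forall s, Rmin t0 t <= s <= Rmax t0 t -> Rabs (w1 s) + Rabs (w2 s) <= C * Rabs (s - t0)^m) ->
  Rabs (RInt w1 t0 t) + Rabs (RInt w2 t0 t) <= C * Rabs (t - t0)^(S m) / INR (S m).
Proof.
  intros H1 H2 Hb. destruct (Rle_lt_dec t0 t) as [Ht|Ht].
  - rewrite (Rabs_pos_eq (t - t0)) by lra. rewrite <- int_pow_pos by lra.
    apply int_le_abs; auto.
    + intros s. apply cmult. apply cconst. apply cder. auto_derive. auto.
    + intros s Hs. rewrite <- (Rabs_pos_eq (s - t0)) by lra. apply Hb.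
      rewrite Rmin_left, Rmax_right; lra.
  - rewrite (Rabs_left (t - t0)) by lra. replace (- (t - t0)) with (t0 - t) by ring.
    rewrite <- int_pow_neg by lra.
    rewrite (RInt_swapR w1 t t0 (exR _ _ _ H1)), (RInt_swapR w2 t t0 (exR _ _ _ H2)).
    rewrite !Rabs_Ropp.
    apply int_le_abs; auto. lra.
    + intros s. apply cmult. apply cconst. apply cder. auto_derive. auto.
    + intros s Hs. replace (t0 - s) with (Rabs (s - t0)).
      apply Hb. rewrite Rmin_right, Rmax_left; lra.
      rewrite Rabs_left1 by lra. ring.
Qed.

Fixpoint psum (u : nat -> R) (N : nat) : R :=
  match N with O => 0 | S N => psum u N + u N end.

Lemma sum_psum u n : sum_f_R0 u n = psum u (S n).
Proof. induction n; simpl. ring. rewrite IHn. simpl. ring. Qed.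

Lemma psum_scal c u N : psum (fun i => c * u i) N = c * psum u N.
Proof. induction N; simpl. ring. rewrite IHN. ring. Qed.

Lemma psum_mono u n m : (forall i, 0 <= u i) -> (n <= m)%nat -> psum u n <= psum u m.
Proof.
  intros Hu Hnm. induction Hnm. lra. simpl. pose proof (Hu m). lra.
Qed.

Lemma psum_le_lim u l : (forall i, 0 <= u i) ->
  (forall eps, 0 < eps -> exists N, forall n, (N <= n)%nat -> Rabs (psum u n - l) < eps) ->
  forall n, psum u n <= l.
Proof.
  intros Hu Hl n. destruct (Rle_lt_dec (psum u n) l) as [|Hlt]; auto. exfalso.
  destruct (Hl (psum u n - l) ltac:(lra)) as [N HN].
  specialize (HN (max N n) ltac:(lia)).
  pose proof (psum_mono u n (max N n) Hu ltac:(lia)).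
  apply Rabs_lt_between in HN. lra.
Qed.

Lemma zero_of_small x : (forall eps, 0 < eps -> Rabs x <= eps) -> x = 0.
Proof.
  intros H. destruct (Req_dec x 0) as [|Hne]; auto. exfalso.
  assert (Hp : 0 < Rabs x) by (apply Rabs_pos_lt; auto).
  specialize (H (Rabs x / 2) ltac:(lra)). lra.
Qed.

Lemma exp_series x : forall eps, 0 < eps -> exists N, forall n, (N <= n)%nat ->
  Rabs (psum (fun i => / INR (fact i) * x ^ i) n - exp x) < eps.
Proof.
  intros eps He.
  assert (Hin : exp_in x (exp x)) by (unfold exp; exact (proj2_sig (exist_exp x))).
  destruct (Hin eps He) as [N HN]. exists (S N). intros n Hn.
  destruct n as [|n]; [lia|]. rewrite <- sum_psum. apply HN. lia.
Qed.

Lemma between_abs a b s : Rmin a b <= s <= Rmax a b -> Rabs (s - a) <= Rabs (b - a).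
Proof.
  unfold Rmin, Rmax. intros Hs. destruct (Rle_dec a b); unfold Rabs;
  repeat destruct Rcase_abs; lra.
Qed.

Lemma pm1 (y x : R) : y + x - y = x. Proof. ring. Qed.
Lemma pm2 (y x z : R) : y + x - (y + z) = x - z. Proof. ring. Qed.

Section Picard.
Variables (a Q Lg t0 y0 v0 : R) (Qf g : R -> R).
Hypothesis HQc : forall t, continuous Qf t.
Hypothesis HQb : forall t, Rabs (Qf t) <= Q.
Hypothesis HLg : forall x y, Rabs (g x - g y) <= Lg * Rabs (x - y).

Definition Gf s y v := - a * v - Qf s * g y.

Fixpoint it (n : nat) : (R -> R) * (R -> R) :=
  match n with
  | O => (fun _ => y0, fun _ => v0)
  | S n => (fun t => y0 + RInt (snd (it n)) t0 t,
            fun t => v0 + RInt (fun s => Gf s (fst (it n) s) (snd (it n) s)) t0 t)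
  end.
Definition Yn n := fst (it n).
Definition Vn n := snd (it n).

Lemma Q_nonneg : 0 <= Q.
Proof. pose proof (HQb 0). pose proof (Rabs_pos (Qf 0)). lra. Qed.
Lemma Lg_nonneg : 0 <= Lg.
Proof. pose proof (HLg 1 0). pose proof (Rabs_pos (g 1 - g 0)).
  replace (1 - 0) with 1 in H by ring. rewrite Rabs_R1 in H. lra. Qed.

Lemma G_cont (Y V : R -> R) : (forall s, continuous Y s) -> (forall s, continuous V s) ->
  forall s, continuous (fun s => Gf s (Y s) (V s)) s.
Proof.
  intros HY HV s. unfold Gf. apply cminus. apply cmult. apply cconst. auto.
  apply cmult. auto. apply ccomp. auto. apply (cont_lip g Lg HLg).
Qed.

Lemma G_lip s y1 v1 y2 v2 :
  Rabs (Gf s y1 v1 - Gf s y2 v2) <= Rabs a * Rabs (v1 - v2) + Q * Lg * Rabs (y1 - y2).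
Proof.
  unfold Gf.
  replace (- a * v1 - Qf s * g y1 - (- a * v2 - Qf s * g y2)) with
    ((- a) * (v1 - v2) + (- Qf s) * (g y1 - g y2)) by ring.
  eapply Rle_trans. apply Rabs_triang. rewrite !Rabs_mult, !Rabs_Ropp.
  apply Rplus_le_compat. lra.
  pose proof (HQb s). pose proof (HLg y1 y2). pose proof (Rabs_pos (Qf s)).
  pose proof (Rabs_pos (g y1 - g y2)). pose proof Q_nonneg.
  replace (Q * Lg * Rabs (y1 - y2)) with (Q * (Lg * Rabs (y1 - y2))) by ring.
  apply Rmult_le_compat; auto.
Qed.

Lemma it_cont n : (forall s, continuous (Yn n) s) /\ (forall s, continuous (Vn n) s).
Proof.
  induction n as [|n [IHY IHV]].
  - split; intros s; apply cconst.
  - split; intros s.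
    + apply cder. eexists. exact (der_int (Vn n) t0 y0 s IHV).
    + apply cder. eexists. exact (der_int _ t0 v0 s (G_cont _ _ IHY IHV)).
Qed.

Definition LL := 1 + Rabs a + Q * Lg.
Definition KK := Rabs v0 + Rabs a * Rabs v0 + Q * Rabs (g y0).

Lemma LL_pos : 1 <= LL.
Proof. unfold LL. pose proof (Rabs_pos a). pose proof Q_nonneg. pose proof Lg_nonneg.
  pose proof (Rmult_le_pos _ _ H0 H1). lra. Qed.
Lemma KK_pos : 0 <= KK.
Proof. unfold KK. pose proof (Rabs_pos a). pose proof (Rabs_pos v0). pose proof Q_nonneg.
  pose proof (Rabs_pos (g y0)). pose proof (Rmult_le_pos _ _ H H0).
  pose proof (Rmult_le_pos _ _ H1 H2). lra. Qed.

Lemma dbound n : forall t,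
  Rabs (Yn (S n) t - Yn n t) + Rabs (Vn (S n) t - Vn n t)
  <= KK * LL^n * Rabs (t - t0)^(S n) / INR (fact (S n)).
Proof.
  induction n as [|n IH]; intros t.
  - change (Yn 1 t - Yn 0 t) with (y0 + RInt (fun _ => v0) t0 t - y0).
    change (Vn 1 t - Vn 0 t) with (v0 + RInt (fun s => Gf s y0 v0) t0 t - v0).
    rewrite !pm1.
    eapply Rle_trans. apply (IB _ _ KK 0).
    + intros; apply cconst.
    + apply G_cont; intros; apply cconst.
    + intros s _. simpl. rewrite Rmult_1_r. unfold KK.
      pose proof (G_lip s y0 v0 0 0). unfold Gf in *.
      replace (- a * v0 - Qf s * g y0) with (- a * v0 + (- Qf s) * g y0) by ring.
      pose proof (Rabs_triang (- a * v0) (- Qf s * g y0)).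
      rewrite !Rabs_mult, !Rabs_Ropp in H0.
      pose proof (HQb s). pose proof (Rabs_pos (g y0)).
      assert (Rabs (Qf s) * Rabs (g y0) <= Q * Rabs (g y0)) by (apply Rmult_le_compat_r; auto).
      lra.
    + simpl. lra.
  - change (Yn (S (S n)) t - Yn (S n) t) with
      ((y0 + RInt (Vn (S n)) t0 t) - (y0 + RInt (Vn n) t0 t)).
    change (Vn (S (S n)) t - Vn (S n) t) with
      ((v0 + RInt (fun s => Gf s (Yn (S n) s) (Vn (S n) s)) t0 t) -
       (v0 + RInt (fun s => Gf s (Yn n s) (Vn n s)) t0 t)).
    destruct (it_cont n) as [CY0 CV0]. destruct (it_cont (S n)) as [CY1 CV1].
    rewrite !pm2. rewrite <- RInt_minusR by (apply exR; auto).
    rewrite <- RInt_minusR by (apply exR; apply G_cont; auto).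
    eapply Rle_trans. apply (IB _ _ (LL * (KK * LL^n / INR (fact (S n)))) (S n)).
    + intros; apply cminus; auto.
    + intros; apply cminus; apply G_cont; auto.
    + intros s _. specialize (IH s).
      pose proof (G_lip s (Yn (S n) s) (Vn (S n) s) (Yn n s) (Vn n s)).
      assert (Rabs (Vn (S n) s - Vn n s) + Rabs a * Rabs (Vn (S n) s - Vn n s) +
              Q * Lg * Rabs (Yn (S n) s - Yn n s) <=
              LL * (Rabs (Yn (S n) s - Yn n s) + Rabs (Vn (S n) s - Vn n s))).
      { unfold LL. pose proof (Rabs_pos (Vn (S n) s - Vn n s)) as A1.
        pose proof (Rabs_pos (Yn (S n) s - Yn n s)) as A2. pose proof (Rabs_pos a) as A3.
        pose proof Q_nonneg as A4. pose proof Lg_nonneg as A5. pose proof (Rmult_le_pos _ _ A4 A5). nra. }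
      assert (LL * (Rabs (Yn (S n) s - Yn n s) + Rabs (Vn (S n) s - Vn n s)) <=
              LL * (KK * LL ^ n * Rabs (s - t0) ^ S n / INR (fact (S n)))).
      { apply Rmult_le_compat_l; auto. pose proof LL_pos; lra. }
      replace (LL * (KK * LL ^ n / INR (fact (S n))) * Rabs (s - t0) ^ S n) with
        (LL * (KK * LL ^ n * Rabs (s - t0) ^ S n / INR (fact (S n)))) by (field; apply INR_fact_neq_0).
      lra.
    + right. change (fact (S (S n))) with (S (S n) * fact (S n))%nat.
      rewrite mult_INR. simpl pow. field. split. apply INR_fact_neq_0. apply not_0_INR. lia.
Qed.

Definition gam W n := KK * W * (LL * W)^n / INR (fact n).

Lemma gam_nonneg W n : 0 <= W -> 0 <= gam W n.
Proof.
  intros HR. unfold gam. pose proof KK_pos. pose proof LL_pos.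
  apply Rmult_le_pos. apply Rmult_le_pos. apply Rmult_le_pos; auto.
  apply pow_le. nra. left. apply Rinv_0_lt_compat. apply INR_fact_lt_0.
Qed.

Lemma dwin n t W : Rabs (t - t0) <= W ->
  Rabs (Yn (S n) t - Yn n t) + Rabs (Vn (S n) t - Vn n t) <= gam W n.
Proof.
  intros HR. eapply Rle_trans. apply dbound. unfold gam.
  pose proof KK_pos. pose proof LL_pos. pose proof (Rabs_pos (t - t0)).
  assert (Hp : Rabs (t - t0) ^ S n <= W ^ S n) by (apply pow_incr; lra).
  assert (Hf : INR (fact n) <= INR (fact (S n))).
  { apply le_INR. change (fact (S n)) with (S n * fact n)%nat. lia. }
  assert (Hf0 : 0 < INR (fact n)) by apply INR_fact_lt_0.
  rewrite Rpow_mult_distr. simpl (W ^ S n) in Hp.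
  assert (0 <= LL ^ n) by (apply pow_le; lra).
  assert (0 <= Rabs (t - t0) ^ S n) by (apply pow_le; lra).
  apply Rle_trans with (KK * LL ^ n * Rabs (t - t0) ^ S n / INR (fact n)).
  - unfold Rdiv. apply Rmult_le_compat_l. apply Rmult_le_pos; [apply Rmult_le_pos|]; auto.
    apply Rinv_le_contravar; auto.
  - replace (KK * W * (LL ^ n * W ^ n) / INR (fact n)) with (KK * LL ^ n * (W * W ^ n) / INR (fact n)) by (field; lra).
    unfold Rdiv. apply Rmult_le_compat_r. left; apply Rinv_0_lt_compat; auto.
    apply Rmult_le_compat_l; auto. apply Rmult_le_pos; auto.
Qed.

Definition Gam W := KK * W * exp (LL * W).
Definition tau W n := Gam W - psum (gam W) n.

Lemma psum_gam W n : psum (gam W) n = KK * W * psum (fun i => / INR (fact i) * (LL * W) ^ i) n.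
Proof.
  rewrite <- psum_scal. induction n; simpl; auto. rewrite IHn. f_equal. unfold gam. field.
  apply INR_fact_neq_0.
Qed.

Lemma tau_lim W : 0 <= W -> forall eps, 0 < eps -> exists N, forall n, (N <= n)%nat -> Rabs (tau W n) < eps.
Proof.
  intros HR eps He. pose proof KK_pos.
  destruct (exp_series (LL * W) (eps / (KK * W + 1))) as [N HN].
  { apply Rdiv_lt_0_compat; auto. nra. }
  exists N. intros n Hn. specialize (HN n Hn). unfold tau, Gam. rewrite psum_gam.
  replace (KK * W * exp (LL * W) - KK * W * psum (fun i : nat => / INR (fact i) * (LL * W) ^ i) n)
    with (- (KK * W) * (psum (fun i : nat => / INR (fact i) * (LL * W) ^ i) n - exp (LL * W))) by ring.
  rewrite Rabs_mult, Rabs_Ropp, Rabs_pos_eq by nra.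
  pose proof (Rabs_pos (psum (fun i : nat => / INR (fact i) * (LL * W) ^ i) n - exp (LL * W))).
  assert (KK * W * Rabs (psum (fun i : nat => / INR (fact i) * (LL * W) ^ i) n - exp (LL * W))
          <= KK * W * (eps / (KK * W + 1))) by (apply Rmult_le_compat_l; nra).
  assert (KK * W * (eps / (KK * W + 1)) < eps).
  { apply (Rmult_lt_reg_r (KK * W + 1)). nra. field_simplify; nra. }
  lra.
Qed.

Lemma tau_nonneg W n : 0 <= W -> 0 <= tau W n.
Proof.
  intros HR. unfold tau. cut (psum (gam W) n <= Gam W). lra.
  apply psum_le_lim. intros; apply gam_nonneg; auto.
  intros eps He. destruct (tau_lim W HR eps He) as [N HN]. exists N. intros m Hm.
  specialize (HN m Hm). unfold tau in HN. rewrite Rabs_minus_sym. auto.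
Qed.

Lemma tau_decr W n : 0 <= W -> tau W (S n) <= tau W n.
Proof. intros HR. unfold tau. simpl. pose proof (gam_nonneg W n HR). lra. Qed.

Lemma cauchy_win n j t W : Rabs (t - t0) <= W ->
  Rabs (Yn (n + j) t - Yn n t) + Rabs (Vn (n + j) t - Vn n t) <= psum (gam W) (n + j) - psum (gam W) n.
Proof.
  intros HR. induction j.
  - rewrite Nat.add_0_r. unfold Rminus. rewrite !Rplus_opp_r, Rabs_R0. lra.
  - rewrite Nat.add_succ_r. simpl psum. pose proof (dwin (n + j) t W HR).
    pose proof (Rabs_triang (Yn (S (n + j)) t - Yn (n + j) t) (Yn (n + j) t - Yn n t)).
    pose proof (Rabs_triang (Vn (S (n + j)) t - Vn (n + j) t) (Vn (n + j) t - Vn n t)).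
    replace (Yn (S (n + j)) t - Yn (n + j) t + (Yn (n + j) t - Yn n t)) with
      (Yn (S (n + j)) t - Yn n t) in H0 by ring.
    replace (Vn (S (n + j)) t - Vn (n + j) t + (Vn (n + j) t - Vn n t)) with
      (Vn (S (n + j)) t - Vn n t) in H1 by ring.
    lra.
Qed.

Lemma cauchy_bound n m t W : 0 <= W -> Rabs (t - t0) <= W -> (n <= m)%nat ->
  Rabs (Yn m t - Yn n t) + Rabs (Vn m t - Vn n t) <= tau W n.
Proof.
  intros HR0 HR Hnm. replace m with (n + (m - n))%nat by lia.
  eapply Rle_trans. apply (cauchy_win n (m - n) t W HR). unfold tau.
  pose proof (tau_nonneg W (n + (m - n)) HR0). unfold tau in H. lra.
Qed.

Lemma lim_ex t : ex_finite_lim_seq (fun n => Yn n t) /\ ex_finite_lim_seq (fun n => Vn n t).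
Proof.
  set (W := Rabs (t - t0)). assert (HR : 0 <= W) by apply Rabs_pos.
  assert (Hc : forall n m, (n <= m)%nat -> Rabs (tau W n) < 1 ->
     True) by auto.
  assert (Hgen : forall n m, Rabs (Yn n t - Yn m t) + Rabs (Vn n t - Vn m t) <= tau W (min n m)).
  { intros n m. destruct (le_lt_dec n m) as [Hnm|Hnm].
    - rewrite Nat.min_l by auto. rewrite (Rabs_minus_sym (Yn n t)), (Rabs_minus_sym (Vn n t)).
      apply cauchy_bound; auto. apply Rle_refl.
    - rewrite Nat.min_r by lia. apply cauchy_bound; auto. apply Rle_refl. lia. }
  split; apply ex_lim_seq_cauchy_corr; intros eps;
   destruct (tau_lim W HR eps (cond_pos eps)) as [N HN]; exists N; intros n m Hn Hm;
   specialize (Hgen n m); specialize (HN (min n m) ltac:(lia));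
   apply Rabs_lt_between in HN;
   pose proof (Rabs_pos (Yn n t - Yn m t)); pose proof (Rabs_pos (Vn n t - Vn m t)); lra.
Qed.

Definition Yl t : R := real (Lim_seq (fun n => Yn n t)).
Definition Vl t : R := real (Lim_seq (fun n => Vn n t)).

Lemma Yl_lim t : is_lim_seq (fun n => Yn n t) (Finite (Yl t)).
Proof. destruct (lim_ex t) as [[l Hl] _]. unfold Yl. rewrite (is_lim_seq_unique _ _ Hl). auto. Qed.
Lemma Vl_lim t : is_lim_seq (fun n => Vn n t) (Finite (Vl t)).
Proof. destruct (lim_ex t) as [_ [l Hl]]. unfold Vl. rewrite (is_lim_seq_unique _ _ Hl). auto. Qed.

Lemma lim_bound n t W : 0 <= W -> Rabs (t - t0) <= W ->
  Rabs (Yl t - Yn n t) + Rabs (Vl t - Vn n t) <= tau W n.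
Proof.
  intros HR0 HR. apply le_epsilon. intros eps He.
  pose proof (proj2 (is_lim_seq_spec _ (Finite (Yl t))) (Yl_lim t) (mkposreal (eps/2) ltac:(lra))) as [N1 H1].
  pose proof (proj2 (is_lim_seq_spec _ (Finite (Vl t))) (Vl_lim t) (mkposreal (eps/2) ltac:(lra))) as [N2 H2].
  set (m := max (max N1 N2) n).
  specialize (H1 m ltac:(unfold m; lia)). specialize (H2 m ltac:(unfold m; lia)). simpl in H1, H2.
  pose proof (cauchy_bound n m t W HR0 HR ltac:(unfold m; lia)).
  pose proof (Rabs_triang (Yl t - Yn m t) (Yn m t - Yn n t)).
  pose proof (Rabs_triang (Vl t - Vn m t) (Vn m t - Vn n t)).
  replace (Yl t - Yn m t + (Yn m t - Yn n t)) with (Yl t - Yn n t) in H0 by ring.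
  replace (Vl t - Vn m t + (Vn m t - Vn n t)) with (Vl t - Vn n t) in H3 by ring.
  rewrite Rabs_minus_sym in H1, H2. lra.
Qed.

Lemma cont_of_pt (f : R -> R) x : continuity_pt f x -> continuous f x.
Proof. intros H. apply continuity_pt_filterlim. auto. Qed.
Lemma pt_of_cont (f : R -> R) x : continuous f x -> continuity_pt f x.
Proof. intros H. apply continuity_pt_filterlim. auto. Qed.

Lemma lim_cont t : continuous Yl t /\ continuous Vl t.
Proof.
  assert (Hgen : forall (F : nat -> R -> R) (Fl : R -> R),
    (forall n s, continuous (F n) s) ->
    (forall n s W, 0 <= W -> Rabs (s - t0) <= W -> Rabs (Fl s - F n s) <= tau W n) ->
    continuous Fl t).
  { intros F Fl HF HB. apply cont_of_pt. apply continuity_pt_locally. intros eps.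
    set (W := Rabs (t - t0) + 1). assert (HR : 0 <= W) by (unfold W; pose proof (Rabs_pos (t - t0)); lra).
    destruct (tau_lim W HR (eps/3) ltac:(pose proof (cond_pos eps); lra)) as [N HN].
    specialize (HN N (le_n _)).
    destruct (cont_near (F N) t (eps/3) (pt_of_cont _ _ (HF N t)) ltac:(pose proof (cond_pos eps); lra)) as [d [Hd Hdd]].
    assert (Hpos : 0 < Rmin d 1) by (apply Rmin_glb_lt; lra).
    exists (mkposreal _ Hpos). intros s Hs. apply ballR in Hs. simpl in Hs.
    pose proof (Rmin_l d 1). pose proof (Rmin_r d 1).
    assert (Hs1 : Rabs (s - t0) <= W).
    { unfold W. replace (s - t0) with ((s - t) + (t - t0)) by ring.
      pose proof (Rabs_triang (s - t) (t - t0)). lra. }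
    assert (Ht1 : Rabs (t - t0) <= W) by (unfold W; lra).
    pose proof (HB N s W HR Hs1). pose proof (HB N t W HR Ht1).
    specialize (Hdd s ltac:(lra)).
    replace (Fl s - Fl t) with ((Fl s - F N s) + (F N s - F N t) + (- (Fl t - F N t))) by ring.
    pose proof (Rabs_triang ((Fl s - F N s) + (F N s - F N t)) (- (Fl t - F N t))) as T1.
    pose proof (Rabs_triang (Fl s - F N s) (F N s - F N t)) as T2.
    rewrite Rabs_Ropp in T1. apply Rabs_lt_between in HN. lra. }
  split.
  - apply (Hgen Yn Yl). intros; apply (it_cont n). intros n s W HR Hs.
    pose proof (lim_bound n s W HR Hs). pose proof (Rabs_pos (Vl s - Vn n s)). lra.
  - apply (Hgen Vn Vl). intros; apply (it_cont n). intros n s W HR Hs.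
    pose proof (lim_bound n s W HR Hs). pose proof (Rabs_pos (Yl s - Yn n s)). lra.
Qed.

Lemma Yl_eq t : Yl t = y0 + RInt Vl t0 t.
Proof.
  apply Rminus_diag_uniq. apply zero_of_small. intros eps He.
  set (W := Rabs (t - t0)). assert (HR : 0 <= W) by apply Rabs_pos.
  destruct (tau_lim W HR (eps / (1 + W)) ltac:(apply Rdiv_lt_0_compat; lra)) as [N HN].
  specialize (HN N (le_n _)).
  pose proof (lim_bound (S N) t W HR (Rle_refl _)). pose proof (tau_decr W N HR).
  pose proof (Rabs_pos (Vl t - Vn (S N) t)).
  assert (HI : Rabs (RInt (fun s => Vn N s - Vl s) t0 t) + Rabs (RInt (fun _ => 0) t0 t)
               <= tau W N * Rabs (t - t0) ^ 1 / INR 1).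
  { apply IB. intros; apply cminus. apply (it_cont N). apply (lim_cont s). intros; apply cconst.
    intros s Hs. rewrite Rabs_R0, Rplus_0_r. simpl. rewrite Rmult_1_r.
    assert (Rabs (s - t0) <= W).
    { unfold W. apply between_abs; auto. }
    pose proof (lim_bound N s W HR H2). pose proof (Rabs_pos (Yl s - Yn N s)).
    rewrite Rabs_minus_sym. lra. }
  simpl in HI. rewrite Rmult_1_r, Rdiv_1 in HI. fold W in HI.
  pose proof (Rabs_pos (RInt (fun _ : R => 0) t0 t)).
  rewrite RInt_minusR in HI by (apply exR; intros; first [apply (proj2 (it_cont N)) | apply (proj2 (lim_cont _))]).
  change (Yn (S N) t) with (y0 + RInt (Vn N) t0 t) in H.
  replace (Yl t - (y0 + RInt Vl t0 t)) with ((Yl t - (y0 + RInt (Vn N) t0 t)) + (RInt (Vn N) t0 t - RInt Vl t0 t)) by ring.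
  eapply Rle_trans. apply Rabs_triang.
  apply Rabs_lt_between in HN.
  assert (tau W N * W <= eps / (1 + W) * W) by (apply Rmult_le_compat_r; lra).
  assert (eps / (1 + W) + eps / (1 + W) * W = eps) by (field; lra).
  pose proof (Rabs_pos (Yl t - (y0 + RInt (Vn N) t0 t))).
  lra.
Qed.

Lemma Vl_eq t : Vl t = v0 + RInt (fun s => Gf s (Yl s) (Vl s)) t0 t.
Proof.
  assert (CYl : forall s, continuous Yl s) by (intros; apply (proj1 (lim_cont s))).
  assert (CVl : forall s, continuous Vl s) by (intros; apply (proj2 (lim_cont s))).
  apply Rminus_diag_uniq. apply zero_of_small. intros eps He.
  set (W := Rabs (t - t0)). assert (HR : 0 <= W) by apply Rabs_pos.
  pose proof LL_pos as HL.
  destruct (tau_lim W HR (eps / (1 + LL * W)) ltac:(apply Rdiv_lt_0_compat; nra)) as [N HN].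
  specialize (HN N (le_n _)).
  pose proof (lim_bound (S N) t W HR (Rle_refl _)). pose proof (tau_decr W N HR).
  pose proof (Rabs_pos (Yl t - Yn (S N) t)).
  destruct (it_cont N) as [CY CV].
  assert (HI : Rabs (RInt (fun s => Gf s (Yn N s) (Vn N s) - Gf s (Yl s) (Vl s)) t0 t) + Rabs (RInt (fun _ => 0) t0 t)
               <= (LL * tau W N) * Rabs (t - t0) ^ 1 / INR 1).
  { apply IB. intros; apply cminus; apply G_cont; auto. intros; apply cconst.
    intros s Hs. rewrite Rabs_R0, Rplus_0_r. simpl. rewrite Rmult_1_r.
    assert (Rabs (s - t0) <= W) by (unfold W; apply between_abs; auto).
    pose proof (lim_bound N s W HR H2).
    pose proof (G_lip s (Yn N s) (Vn N s) (Yl s) (Vl s)).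
    rewrite (Rabs_minus_sym (Yn N s)), (Rabs_minus_sym (Vn N s)) in H4.
    pose proof (Rabs_pos (Yl s - Yn N s)) as A1. pose proof (Rabs_pos (Vl s - Vn N s)) as A2.
    pose proof (Rabs_pos a) as A3. pose proof Q_nonneg as A4. pose proof Lg_nonneg as A5.
    pose proof (Rmult_le_pos _ _ A4 A5) as A6.
    assert (Rabs a * Rabs (Vl s - Vn N s) + Q * Lg * Rabs (Yl s - Yn N s) <=
            LL * (Rabs (Yl s - Yn N s) + Rabs (Vl s - Vn N s))) by (unfold LL; nra).
    assert (LL * (Rabs (Yl s - Yn N s) + Rabs (Vl s - Vn N s)) <= LL * tau W N)
      by (apply Rmult_le_compat_l; lra).
    lra. }
  simpl in HI. rewrite Rmult_1_r, Rdiv_1 in HI. fold W in HI.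
  pose proof (Rabs_pos (RInt (fun _ : R => 0) t0 t)).
  rewrite RInt_minusR in HI by (apply exR; intros; apply G_cont; auto).
  change (Vn (S N) t) with (v0 + RInt (fun s => Gf s (Yn N s) (Vn N s)) t0 t) in H.
  replace (Vl t - (v0 + RInt (fun s => Gf s (Yl s) (Vl s)) t0 t)) with
    ((Vl t - (v0 + RInt (fun s => Gf s (Yn N s) (Vn N s)) t0 t)) +
     (RInt (fun s => Gf s (Yn N s) (Vn N s)) t0 t - RInt (fun s => Gf s (Yl s) (Vl s)) t0 t)) by ring.
  eapply Rle_trans. apply Rabs_triang.
  apply Rabs_lt_between in HN.
  assert (LL * tau W N * W <= LL * (eps / (1 + LL * W)) * W).
  { apply Rmult_le_compat_r; auto. apply Rmult_le_compat_l; lra. }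
  assert (eps / (1 + LL * W) + LL * (eps / (1 + LL * W)) * W = eps) by (field; nra).
  pose proof (Rabs_pos (Vl t - (v0 + RInt (fun s => Gf s (Yn N s) (Vn N s)) t0 t))).
  lra.
Qed.

Lemma picard : exists Y V : R -> R,
  (forall t, is_derive Y t (V t) /\ is_derive V t (- a * V t - Qf t * g (Y t))) /\
  Y t0 = y0 /\ V t0 = v0.
Proof.
  assert (CYl : forall s, continuous Yl s) by (intros; apply (proj1 (lim_cont s))).
  assert (CVl : forall s, continuous Vl s) by (intros; apply (proj2 (lim_cont s))).
  exists Yl, Vl. split; [|split].
  - intros t. split.
    + apply (is_derive_ext (fun u => y0 + RInt Vl t0 u)). intros; symmetry; apply Yl_eq.
      apply der_int; auto.
    + apply (is_derive_ext (fun u => v0 + RInt (fun s => Gf s (Yl s) (Vl s)) t0 u)).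
      intros; symmetry; apply Vl_eq.
      apply (der_int (fun s => Gf s (Yl s) (Vl s))). apply G_cont; auto.
  - rewrite Yl_eq. rewrite RInt_point. apply Rplus_0_r.
  - rewrite Vl_eq. rewrite RInt_point. apply Rplus_0_r.
Qed.
End Picard.

Lemma herm_eqs a1 b1 a2 b2 a3 b3 a4 b4 :
  hermitian (mkM2 (a1, b1) (a2, b2) (a3, b3) (a4, b4)) -> a3 = a2 /\ b3 = - b2 /\ b1 = - b1 /\ b4 = - b4.
Proof.
  intros Hh. unfold hermitian, Madj, Cconj in Hh.
  pose proof (f_equal (fun M => fst (m21 M)) Hh) as E1.
  pose proof (f_equal (fun M => snd (m21 M)) Hh) as E2.
  pose proof (f_equal (fun M => snd (m11 M)) Hh) as E3.
  pose proof (f_equal (fun M => snd (m22 M)) Hh) as E4.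
  cbn [m11 m12 m21 m22 fst snd] in E1, E2, E3, E4. lra.
Qed.

Lemma lyap_re (M : M2) alpha btil (phitil : R -> R) mu t : hermitian M ->
  let D := Defs.Madd (Defs.Mopp MI) (Defs.Mopp (Defs.Madd (Defs.Mmul M (Atil alpha btil phitil mu t))
                                     (Defs.Mmul (Madj (Atil alpha btil phitil mu t)) M))) in
  let c := btil * mu ^ 2 + mu * phitil t in
  Re (m11 D) = -1 + 2 * c * Re (m12 M) /\
  Re (m12 D) = - Re (m11 M) + alpha * mu * Re (m12 M) + c * Re (m22 M) /\
  Re (m22 D) = -1 - 2 * Re (m12 M) + 2 * (alpha * mu) * Re (m22 M).
Proof.
  intros Hh D c. destruct M as [[a1 b1] [a2 b2] [a3 b3] [a4 b4]].
  destruct (herm_eqs _ _ _ _ _ _ _ _ Hh) as [E1 [E2 [E3 E4]]].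
  unfold D, c, Defs.Madd, Defs.Mopp, Defs.Mmul, Madj, MI, Atil.
  cbn [m11 m12 m21 m22].
  unfold Cplus, Copp, Cmult, Cconj, RtoC, Re.
  cbn [fst snd]. rewrite E1. clear D c Hh.
  split; [|split]; ring.
Qed.

Lemma herm_re21 (M : M2) : hermitian M -> Re (m21 M) = Re (m12 M).
Proof.
  intros Hh. destruct M as [[a1 b1] [a2 b2] [a3 b3] [a4 b4]].
  destruct (herm_eqs _ _ _ _ _ _ _ _ Hh) as [E1 _]. unfold Re. cbn [m21 m12 fst]. auto.
Qed.

Lemma Cmod_sq (x : C) : Cmod x ^ 2 = Re x ^ 2 + Im x ^ 2.
Proof.
  unfold Cmod. rewrite pow2_sqrt. reflexivity.
  pose proof (pow2_ge_0 (fst x)). pose proof (pow2_ge_0 (snd x)). lra.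
Qed.

Lemma vnorm_sq (z : C * C) : vnorm z ^ 2 = Cmod (fst z) ^ 2 + Cmod (snd z) ^ 2.
Proof.
  unfold vnorm. rewrite pow2_sqrt. reflexivity.
  pose proof (pow2_ge_0 (Cmod (fst z))). pose proof (pow2_ge_0 (Cmod (snd z))). lra.
Qed.

Lemma vnorm_pos z : 0 <= vnorm z.
Proof. apply sqrt_pos. Qed.

Lemma Cmod_le_vnorm1 z : Cmod (fst z) <= vnorm z.
Proof.
  apply Rsqr_incr_0_var. unfold Rsqr. pose proof (vnorm_sq z). pose proof (pow2_ge_0 (Cmod (snd z))).
  simpl in H. nra. apply vnorm_pos.
Qed.
Lemma Cmod_le_vnorm2 z : Cmod (snd z) <= vnorm z.
Proof.
  apply Rsqr_incr_0_var. unfold Rsqr. pose proof (vnorm_sq z). pose proof (pow2_ge_0 (Cmod (fst z))).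
  simpl in H. nra. apply vnorm_pos.
Qed.

Lemma vnorm_le_sum z : vnorm z <= Cmod (fst z) + Cmod (snd z).
Proof.
  apply Rsqr_incr_0_var. unfold Rsqr. pose proof (vnorm_sq z).
  pose proof (Cmod_ge_0 (fst z)). pose proof (Cmod_ge_0 (snd z)). simpl in H. nra.
  pose proof (Cmod_ge_0 (fst z)). pose proof (Cmod_ge_0 (snd z)). lra.
Qed.

Lemma opnorm_bound (A : M2) z : vnorm z = 1 -> vnorm (Mvec A z) <= opnorm A.
Proof.
  intros Hz. unfold opnorm. apply lub_ub. exists z; auto.
  exists (Cmod (m11 A) + Cmod (m12 A) + Cmod (m21 A) + Cmod (m22 A)).
  intros r [w [Hw ->]].
  assert (H1 := Cmod_le_vnorm1 w). assert (H2 := Cmod_le_vnorm2 w). rewrite Hw in H1, H2.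
  eapply Rle_trans. apply vnorm_le_sum. unfold Mvec; simpl.
  pose proof (Cmod_triangle (Cmult (m11 A) (fst w)) (Cmult (m12 A) (snd w))).
  pose proof (Cmod_triangle (Cmult (m21 A) (fst w)) (Cmult (m22 A) (snd w))).
  rewrite !Cmod_mult in H, H0.
  pose proof (Cmod_ge_0 (m11 A)). pose proof (Cmod_ge_0 (m12 A)).
  pose proof (Cmod_ge_0 (m21 A)). pose proof (Cmod_ge_0 (m22 A)).
  pose proof (Cmod_ge_0 (fst w)). pose proof (Cmod_ge_0 (snd w)).
  assert (Cmod (m11 A) * Cmod (fst w) <= Cmod (m11 A)) by nra.
  assert (Cmod (m12 A) * Cmod (snd w) <= Cmod (m12 A)) by nra.
  assert (Cmod (m21 A) * Cmod (fst w) <= Cmod (m21 A)) by nra.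
  assert (Cmod (m22 A) * Cmod (snd w) <= Cmod (m22 A)) by nra.
  lra.
Qed.

Lemma real_bound (M : M2) h y v : hermitian M -> opnorm M <= h ->
  (Re (m11 M) * y + Re (m12 M) * v) ^ 2 + (Re (m12 M) * y + Re (m22 M) * v) ^ 2 <= h ^ 2 * (y ^ 2 + v ^ 2).
Proof.
  intros Hh Hop.
  destruct (Req_dec (y ^ 2 + v ^ 2) 0) as [H0|H0].
  - assert (y = 0) by nra. assert (v = 0) by nra. subst. simpl. nra.
  - set (n := sqrt (y ^ 2 + v ^ 2)).
    assert (Hn2 : n ^ 2 = y ^ 2 + v ^ 2) by (unfold n; rewrite pow2_sqrt; nra).
    assert (Hn : 0 < n) by (unfold n; apply sqrt_lt_R0; nra).
    set (z := (RtoC (y / n), RtoC (v / n))).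
    assert (Hz : vnorm z = 1).
    { unfold z, vnorm. cbn [fst snd]. rewrite !Cmod_R.
      rewrite <- !Rsqr_pow2, <- !Rsqr_abs, !Rsqr_pow2.
      replace ((y / n) ^ 2 + (v / n) ^ 2) with 1. apply sqrt_1.
      field_simplify. rewrite Hn2. field. auto. lra. }
    pose proof (opnorm_bound M z Hz) as Hb.
    pose proof (vnorm_pos (Mvec M z)).
    assert (Hb2 : vnorm (Mvec M z) ^ 2 <= h ^ 2) by nra.
    rewrite vnorm_sq in Hb2. rewrite !Cmod_sq in Hb2.
    pose proof (herm_re21 M Hh) as E21.
    assert (R1 : Re (fst (Mvec M z)) = Re (m11 M) * (y / n) + Re (m12 M) * (v / n)).
    { unfold z, Mvec, Cplus, Cmult, RtoC, Re. cbn [fst snd]. ring. }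
    assert (R2 : Re (snd (Mvec M z)) = Re (m12 M) * (y / n) + Re (m22 M) * (v / n)).
    { rewrite <- E21. unfold z, Mvec, Cplus, Cmult, RtoC, Re. cbn [fst snd]. ring. }
    rewrite R1, R2 in Hb2.
    set (a1 := Re (m11 M)) in *. set (a2 := Re (m12 M)) in *. set (a4 := Re (m22 M)) in *.
    assert (Hx : (a1 * (y / n) + a2 * (v / n)) ^ 2 + (a2 * (y / n) + a4 * (v / n)) ^ 2 <= h ^ 2).
    { pose proof (pow2_ge_0 (Im (fst (Mvec M z)))). pose proof (pow2_ge_0 (Im (snd (Mvec M z)))). lra. }
    replace ((a1 * y + a2 * v) ^ 2 + (a2 * y + a4 * v) ^ 2) with
      (n ^ 2 * ((a1 * (y / n) + a2 * (v / n)) ^ 2 + (a2 * (y / n) + a4 * (v / n)) ^ 2)) by (field; lra).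
    rewrite <- Hn2. pose proof (pow2_ge_0 n). 
    replace (h ^ 2 * n ^ 2) with (n ^ 2 * h ^ 2) by ring. apply Rmult_le_compat_l; lra.
Qed.
Lemma Vder (P1 P2 P3 Y V : R -> R) u d1 d2 d3 w :
 is_derive P1 u d1 -> is_derive P2 u d2 -> is_derive P3 u d3 -> is_derive Y u (V u) -> is_derive V u w ->
 is_derive (fun s => P1 s * Y s ^ 2 + 2 * P2 s * Y s * V s + P3 s * V s ^ 2) u
   (d1 * Y u^2 + 2*d2*Y u*V u + d3*V u^2 + 2*P1 u*Y u*V u + 2*P2 u*(V u^2 + Y u*w) + 2*P3 u*V u*w).
Proof.
  intros H1 H2 H3 HY HV.
  auto_derive.
  - repeat split; eexists; eauto.
  - rewrite (is_derive_unique (fun x : R => P1 x) _ _ H1), (is_derive_unique (fun x : R => P2 x) _ _ H2), (is_derive_unique (fun x : R => P3 x) _ _ H3),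
      (is_derive_unique (fun x : R => Y x) _ _ HY), (is_derive_unique (fun x : R => V x) _ _ HV). ring.
Qed.
Lemma Nder (Y V : R -> R) K u w :
 is_derive Y u (V u) -> is_derive V u w ->
 is_derive (fun s => (Y s ^ 2 + V s ^ 2) * exp (K * s)) u
   ((2 * Y u * V u + 2 * V u * w + K * (Y u ^ 2 + V u ^ 2)) * exp (K * u)).
Proof.
  intros HY HV. auto_derive.
  - repeat split; eexists; eauto.
  - rewrite (is_derive_unique (fun x : R => Y x) _ _ HY), (is_derive_unique (fun x : R => V x) _ _ HV). ring.
Qed.

Lemma lyap_alg p1 p2 p3 c am y v E w : w = - c * y - am * v + E ->
  (-1 + 2 * c * p2) * y ^ 2 + 2 * (- p1 + am * p2 + c * p3) * y * v + (-1 - 2 * p2 + 2 * am * p3) * v ^ 2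
  + 2 * p1 * y * v + 2 * p2 * (v ^ 2 + y * w) + 2 * p3 * v * w
  = - (y ^ 2 + v ^ 2) + 2 * (p2 * y + p3 * v) * E.
Proof. intros ->. ring. Qed.

Lemma sq_le X Y : X ^ 2 <= Y ^ 2 -> 0 <= Y -> X <= Y.
Proof. intros. nra. Qed.
Lemma sq_abs_le X Y : X ^ 2 <= Y ^ 2 -> 0 <= Y -> Rabs X <= Y.
Proof. intros. apply sq_le; auto. rewrite <- Rsqr_pow2, <- Rsqr_abs, Rsqr_pow2. auto. Qed.

Lemma expder (F : R -> R) (dF cr t0 u : R) : is_derive F u dF ->
  is_derive (fun u => F u * exp (cr * (u - t0))) u ((dF + cr * F u) * exp (cr * (u - t0))).
Proof.
  intros HF. auto_derive. eexists; eauto.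
  rewrite (is_derive_unique (fun x : R => F x) _ _ HF). replace (u + - t0) with (u - t0) by ring. ring.
Qed.

Section Main.
Variables (T alpha beta : R) (phi f : R -> R) (mu p rho dalpha dbeta : R) (dphi : R -> R) (H : R -> M2).
Hypothesis hT : 0 < T.
Hypothesis hphi_cont : forall t, continuous phi t.
Hypothesis hphi_per : forall t, phi (t + T) = phi t.
Hypothesis hmu : 0 < mu.
Hypothesis hH : lyap_periodic_sol T alpha (beta * Derive f 0) (fun t => phi t * Derive f 0) mu H.
Hypothesis hsmall2 : mu * (Rabs (dbeta * Derive f 0) * mu + Rabs dalpha) < 1 / (8 * hmax T H).

Definition kk := Derive f 0.
Definition am := alpha * mu.
Definition cc t := beta * kk * mu ^ 2 + mu * (phi t * kk).
Definition p1 t := Re (m11 (H t)).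
Definition p2 t := Re (m12 (H t)).
Definition p3 t := Re (m22 (H t)).
Definition dp1 t := -1 + 2 * cc t * p2 t.
Definition dp2 t := - p1 t + am * p2 t + cc t * p3 t.
Definition dp3 t := -1 - 2 * p2 t + 2 * am * p3 t.
Definition hmx := hmax T H.
Definition form t y v := p1 t * y ^ 2 + 2 * p2 t * y * v + p3 t * v ^ 2.

Lemma p_der t : 0 <= t <= T ->
  is_derive p1 t (dp1 t) /\ is_derive p2 t (dp2 t) /\ is_derive p3 t (dp3 t).
Proof.
  intros Ht. destruct hH as [Hd _]. destruct (Hd t Ht) as [Hh [D11 [D12 [D21 D22]]]].
  destruct (lyap_re (H t) alpha (beta * Derive f 0) (fun t => phi t * Derive f 0) mu t Hh) as [E1 [E2 E3]].
  destruct D11 as [D11 _]. destruct D12 as [D12 _]. destruct D22 as [D22 _].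
  split; [|split].
  - unfold p1, dp1. rewrite E1 in D11. exact D11.
  - unfold p2, dp2. rewrite E2 in D12. exact D12.
  - unfold p3, dp3. rewrite E3 in D22. exact D22.
Qed.

Lemma hmx_pos : 0 < hmx.
Proof.
  pose proof hsmall2 as Hs. fold hmx in Hs.
  assert (0 <= mu * (Rabs (dbeta * Derive f 0) * mu + Rabs dalpha)).
  { apply Rmult_le_pos; [lra|]. pose proof (Rabs_pos (dbeta * Derive f 0)). pose proof (Rabs_pos dalpha). nra. }
  destruct (Rlt_le_dec 0 hmx) as [|Hle]; auto. exfalso.
  destruct (Req_dec hmx 0) as [Heq|Hne].
  - rewrite Heq in Hs. rewrite Rmult_0_r in Hs. unfold Rdiv in Hs. rewrite Rinv_0 in Hs. lra.
  - assert (/ (8 * hmx) < 0) by (apply Rinv_lt_0_compat; lra). unfold Rdiv in Hs. lra.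
Qed.

Lemma hmx_bound s : 0 <= s <= T -> opnorm (H s) <= hmx.
Proof.
  intros Hs. unfold hmx, hmax.
  destruct (lub_ub_or (fun r => exists t, 0 <= t <= T /\ r = opnorm (H t)) (opnorm (H s))) as [|E].
  exists s; auto. auto. exfalso. pose proof hmx_pos. unfold hmx, hmax in H0. lra.
Qed.

Lemma herm s : 0 <= s <= T -> hermitian (H s).
Proof. intros Hs. destruct hH as [Hd _]. apply (Hd s Hs). Qed.

Lemma Fbound s y v : 0 <= s <= T ->
  (p1 s * y + p2 s * v) ^ 2 + (p2 s * y + p3 s * v) ^ 2 <= hmx ^ 2 * (y ^ 2 + v ^ 2).
Proof. intros Hs. apply real_bound. apply herm; auto. apply hmx_bound; auto. Qed.

Lemma form_upper s y v : 0 <= s <= T -> form s y v <= hmx * (y ^ 2 + v ^ 2).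
Proof.
  intros Hs. pose proof (Fbound s y v Hs). pose proof hmx_pos. unfold form.
  apply sq_le. 2:{ pose proof (pow2_ge_0 y). pose proof (pow2_ge_0 v). nra. }
  set (A := p1 s * y + p2 s * v) in *. set (B := p2 s * y + p3 s * v) in *.
  replace (p1 s * y ^ 2 + 2 * p2 s * y * v + p3 s * v ^ 2) with (y * A + v * B) by (unfold A, B; ring).
  assert ((y * A + v * B) ^ 2 <= (y ^ 2 + v ^ 2) * (A ^ 2 + B ^ 2)).
  { pose proof (pow2_ge_0 (y * B - v * A)). nra. }
  pose proof (pow2_ge_0 y). pose proof (pow2_ge_0 v).
  assert ((y ^ 2 + v ^ 2) * (A ^ 2 + B ^ 2) <= (y ^ 2 + v ^ 2) * (hmx ^ 2 * (y ^ 2 + v ^ 2))).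
  { apply Rmult_le_compat_l; lra. }
  nra.
Qed.

Lemma B_bound s y v : 0 <= s <= T -> Rabs (p2 s * y + p3 s * v) <= hmx * sqrt (y ^ 2 + v ^ 2).
Proof.
  intros Hs. pose proof (Fbound s y v Hs). pose proof hmx_pos.
  apply sq_abs_le. rewrite Rpow_mult_distr, pow2_sqrt. pose proof (pow2_ge_0 (p1 s * y + p2 s * v)). lra.
  pose proof (pow2_ge_0 y). pose proof (pow2_ge_0 v). lra.
  apply Rmult_le_pos. lra. apply sqrt_pos.
Qed.

Lemma form0_pos y v : (y <> 0 \/ v <> 0) -> 0 < form 0 y v.
Proof.
  intros Hyv. destruct hH as [_ [_ [Hh Hp]]].
  assert (Hz : (RtoC y, RtoC v) <> (RtoC 0, RtoC 0)).
  { intros E. pose proof (f_equal (fun z => fst (fst z)) E) as E1.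
    pose proof (f_equal (fun z => fst (snd z)) E) as E2.
    unfold RtoC in E1, E2. cbn [fst snd] in E1, E2. lra. }
  specialize (Hp _ Hz).
  unfold form, p1, p2, p3.
  destruct (H 0) as [[a1 b1] [a2 b2] [a3 b3] [a4 b4]].
  destruct (herm_eqs _ _ _ _ _ _ _ _ Hh) as [E1 [E2 [E3 E4]]].
  unfold Mvec in Hp. cbn [m11 m12 m21 m22 fst snd] in Hp.
  unfold Cplus, Cmult, Cconj, RtoC, Re in Hp. cbn [fst snd] in Hp.
  unfold Re. cbn [m11 m12 m21 m22 fst snd]. rewrite E1 in Hp.
  replace (a1 * y ^ 2 + 2 * a2 * y * v + a4 * v ^ 2) with
    (y * (a1 * y - b1 * 0 + (a2 * v - b2 * 0)) - - 0 * (a1 * 0 + b1 * y + (a2 * 0 + b2 * v)) +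
     (v * (a2 * y - b3 * 0 + (a4 * v - b4 * 0)) - - 0 * (a2 * 0 + b3 * y + (a4 * 0 + b4 * v)))) by ring.
  exact Hp.
Qed.

Lemma lam0_exists : exists l0, 0 < l0 /\ forall y v, l0 * (y ^ 2 + v ^ 2) <= form 0 y v.
Proof.
  assert (Ha : 0 < p1 0) by (pose proof (form0_pos 1 0 ltac:(lra)); unfold form in H0; lra).
  assert (Hc : 0 < p3 0) by (pose proof (form0_pos 0 1 ltac:(lra)); unfold form in H0; lra).
  assert (Hd : 0 < p1 0 * p3 0 - p2 0 ^ 2).
  { pose proof (form0_pos (p2 0) (- p1 0) ltac:(lra)). unfold form in H0.
    assert (p1 0 * (p1 0 * p3 0 - p2 0 ^ 2) > 0) by nra. nra. }
  exists ((p1 0 * p3 0 - p2 0 ^ 2) / (p1 0 + p3 0)). split.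
  apply Rdiv_lt_0_compat; lra.
  intros y v. unfold form.
  apply (Rmult_le_reg_r (p1 0 + p3 0)). lra.
  replace ((p1 0 * p3 0 - p2 0 ^ 2) / (p1 0 + p3 0) * (y ^ 2 + v ^ 2) * (p1 0 + p3 0))
    with ((p1 0 * p3 0 - p2 0 ^ 2) * (y ^ 2 + v ^ 2)) by (field; lra).
  pose proof (pow2_ge_0 (p1 0 * y + p2 0 * v)). pose proof (pow2_ge_0 (p3 0 * v + p2 0 * y)). nra.
Qed.

Lemma phi_bound : exists Phi, forall s, Rabs (phi s) <= Phi.
Proof.
  destruct (continuity_ab_maj (fun s => Rabs (phi s)) 0 T ltac:(lra)) as [M [HM _]].
  { intros c _. apply pt_of_cont. apply cabs. auto. }
  exists (Rabs (phi M)). intros s. rewrite <- (per_md phi T hphi_per s).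
  apply HM. pose proof (md_spec T s hT). lra.
Qed.

Lemma cc_cont t : continuous cc t.
Proof. unfold cc. apply cplus. apply cconst. apply cmult. apply cconst. apply cmult. auto. apply cconst. Qed.

Lemma cc_per s : cc (md T s) = cc s.
Proof. unfold cc. rewrite (per_md phi T hphi_per s). auto. Qed.


Lemma p_per : p1 0 = p1 T /\ p2 0 = p2 T /\ p3 0 = p3 T.
Proof. destruct hH as [_ [E _]]. unfold p1, p2, p3. rewrite E. auto. Qed.

Lemma cc_bound Phi : (forall s, Rabs (phi s) <= Phi) ->
  forall t, Rabs (cc t) <= Rabs (beta * kk) * mu ^ 2 + mu * (Phi * Rabs kk).
Proof.
  intros HP t. unfold cc. eapply Rle_trans. apply Rabs_triang.
  rewrite !Rabs_mult. rewrite (Rabs_pos_eq mu) by lra. rewrite (Rabs_pos_eq (mu ^ 2)) by (apply pow_le; lra).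
  apply Rplus_le_compat. lra.
  apply Rmult_le_compat_l. lra. apply Rmult_le_compat_r. apply Rabs_pos. auto.
Qed.

Lemma lam_exists : exists lam, 0 < lam /\ forall s y v, 0 <= s <= T -> lam * (y ^ 2 + v ^ 2) <= form s y v.
Proof.
  destruct lam0_exists as [l0 [Hl0 Hf0]]. destruct phi_bound as [Phi HPhi].
  set (C := Rabs (beta * kk) * mu ^ 2 + mu * (Phi * Rabs kk)).
  assert (HC : forall t, Rabs (cc t) <= C) by (apply cc_bound; auto).
  assert (HC0 : 0 <= C) by (pose proof (HC 0); pose proof (Rabs_pos (cc 0)); lra).
  set (K := 2 + 2 * C + 2 * Rabs am).
  assert (HK : 0 <= K) by (unfold K; pose proof (Rabs_pos am); lra).
  exists (l0 * exp (- (K * T))). split.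
  { apply Rmult_lt_0_compat; auto. apply exp_pos. }
  intros s y0 v0 Hs.
  assert (Hlip : forall x y : R, Rabs ((fun x => x) x - (fun x => x) y) <= 1 * Rabs (x - y)).
  { intros; lra. }
  destruct (picard am C 1 s y0 v0 cc (fun x => x) cc_cont HC Hlip) as [Y [V [HD [HY0 HV0]]]].
  set (Wf := fun u => p1 u * Y u ^ 2 + 2 * p2 u * Y u * V u + p3 u * V u ^ 2).
  assert (HW : forall u, 0 <= u <= T -> is_derive Wf u (- (Y u ^ 2 + V u ^ 2))).
  { intros u Hu. destruct (p_der u Hu) as [D1 [D2 D3]]. destruct (HD u) as [DY DV].
    pose proof (Vder p1 p2 p3 Y V u _ _ _ _ D1 D2 D3 DY DV) as K1.
    match type of K1 with is_derive _ _ ?val => replace (- (Y u ^ 2 + V u ^ 2)) with val end.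
    exact K1. unfold dp1, dp2, dp3. ring. }
  assert (HWle : Wf T <= Wf s).
  { apply (cont_ind Wf (fun u => - (Y u ^ 2 + V u ^ 2)) s T (Wf s + 1)); try lra.
    - intros x Hx. apply pt_of_cont. apply cder. eexists. apply HW. lra.
    - intros x Hx. apply HW. lra.
    - intros x _ _. pose proof (pow2_ge_0 (Y x)). pose proof (pow2_ge_0 (V x)). lra. }
  set (Nf := fun u => (Y u ^ 2 + V u ^ 2) * exp (K * u)).
  set (dN := fun u => (2 * Y u * V u + 2 * V u * (- am * V u - cc u * Y u) + K * (Y u ^ 2 + V u ^ 2)) * exp (K * u)).
  assert (HN : forall u, is_derive (fun u => - Nf u) u (- dN u)).
  { intros u. destruct (HD u) as [DY DV]. unfold Nf, dN.
    apply (is_derive_opp (fun u => (Y u ^ 2 + V u ^ 2) * exp (K * u))).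
    apply Nder; auto. }
  assert (HdN : forall u, 0 <= dN u).
  { intros u. unfold dN. apply Rmult_le_pos; [|left; apply exp_pos].
    pose proof (HC u) as Hcu. set (y := Y u) in *. set (v := V u) in *. set (c := cc u) in *.
    assert (A1 : - (y ^ 2 + v ^ 2) <= 2 * y * v) by (pose proof (pow2_ge_0 (y + v)); nra).
    assert (A1' : 2 * y * v <= y ^ 2 + v ^ 2) by (pose proof (pow2_ge_0 (y - v)); nra).
    assert (A2 : - Rabs am * v ^ 2 <= - am * v ^ 2).
    { pose proof (Rle_abs am). pose proof (pow2_ge_0 v). nra. }
    assert (A3 : Rabs (c * (2 * y * v)) <= C * (y ^ 2 + v ^ 2)).
    { rewrite Rabs_mult. apply Rmult_le_compat; auto. apply Rabs_pos. apply Rabs_pos.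
      apply Rabs_le. lra. }
    pose proof (Rle_abs (c * (2 * y * v))) as A4.
    assert (A5 : 0 <= Rabs am * y ^ 2) by (apply Rmult_le_pos; [apply Rabs_pos|apply pow2_ge_0]).
    assert (HKe : K * (y ^ 2 + v ^ 2) = 2 * (y ^ 2 + v ^ 2) + 2 * (C * (y ^ 2 + v ^ 2)) + 2 * (Rabs am * y ^ 2) + 2 * (Rabs am * v ^ 2)) by (unfold K; ring).
    replace (2 * y * v + 2 * v * (- am * v - c * y)) with
      (2 * y * v + 2 * (- am * v ^ 2) - c * (2 * y * v)) by ring.
    rewrite HKe. pose proof (pow2_ge_0 y). pose proof (pow2_ge_0 v).
    assert (A6 : 0 <= C * (y ^ 2 + v ^ 2)) by (apply Rmult_le_pos; lra). lra. }
  assert (HNle : - Nf T <= - Nf s).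
  { apply (cont_ind (fun u => - Nf u) (fun u => - dN u) s T (- Nf s + 1)); try lra.
    - intros x Hx. apply pt_of_cont. apply cder. eexists. apply HN.
    - intros x Hx. apply HN.
    - intros x _ _. pose proof (HdN x). lra. }
  destruct p_per as [E1 [E2 E3]].
  assert (HWT : Wf T = form 0 (Y T) (V T)) by (unfold Wf, form; rewrite E1, E2, E3; auto).
  pose proof (Hf0 (Y T) (V T)) as HT0.
  assert (HWs : Wf s = form s y0 v0) by (unfold Wf, form; rewrite HY0, HV0; auto).
  unfold Nf in HNle. rewrite HY0, HV0 in HNle.
  assert (Hexp1 : 1 <= exp (K * s)).
  { rewrite <- exp_0. destruct (Req_dec (K * s) 0) as [E|E]. rewrite E; lra.
    left. apply exp_increasing. assert (0 <= K * s) by (apply Rmult_le_pos; lra). lra. }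
  assert (HeKT : exp (- (K * T)) * exp (K * T) = 1) by (rewrite <- exp_plus; replace (- (K * T) + K * T) with 0 by ring; apply exp_0).
  assert (Hpos1 : 0 < exp (- (K * T))) by apply exp_pos.
  assert (Hsq : (y0 ^ 2 + v0 ^ 2) <= (Y T ^ 2 + V T ^ 2) * exp (K * T)).
  { pose proof (pow2_ge_0 y0). pose proof (pow2_ge_0 v0). nra. }
  assert (Hsq2 : exp (- (K * T)) * (y0 ^ 2 + v0 ^ 2) <= Y T ^ 2 + V T ^ 2).
  { apply (Rmult_le_compat_l (exp (- (K * T)))) in Hsq; [|lra].
    replace (exp (- (K * T)) * ((Y T ^ 2 + V T ^ 2) * exp (K * T))) with ((Y T ^ 2 + V T ^ 2) * (exp (- (K * T)) * exp (K * T))) in Hsq by ring.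
    rewrite HeKT in Hsq. lra. }
  assert (l0 * (exp (- (K * T)) * (y0 ^ 2 + v0 ^ 2)) <= l0 * (Y T ^ 2 + V T ^ 2)) by (apply Rmult_le_compat_l; lra).
  rewrite <- HWs. lra.
Qed.

Definition Pt1 s := p1 (md T s).
Definition Pt2 s := p2 (md T s).
Definition Pt3 s := p3 (md T s).
Definition formt s y v := Pt1 s * y ^ 2 + 2 * Pt2 s * y * v + Pt3 s * v ^ 2.

Lemma cc_T : cc 0 = cc T.
Proof. unfold cc. rewrite <- (Rplus_0_l T). rewrite hphi_per. auto. Qed.

Lemma Pt_der s : is_derive Pt1 s (-1 + 2 * cc s * Pt2 s) /\
  is_derive Pt2 s (- Pt1 s + am * Pt2 s + cc s * Pt3 s) /\
  is_derive Pt3 s (-1 - 2 * Pt2 s + 2 * am * Pt3 s).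
Proof.
  destruct p_per as [E1 [E2 E3]]. pose proof cc_T as Ec.
  assert (D1 : forall t, 0 <= t <= T -> is_derive p1 t (dp1 t)) by (intros; apply p_der; auto).
  assert (D2 : forall t, 0 <= t <= T -> is_derive p2 t (dp2 t)) by (intros; apply p_der; auto).
  assert (D3 : forall t, 0 <= t <= T -> is_derive p3 t (dp3 t)) by (intros; apply p_der; auto).
  pose proof (cc_per s) as Cs.
  split; [|split].
  - pose proof (per_ext T p1 dp1 hT D1 E1 ltac:(unfold dp1; rewrite Ec, E2; auto) s) as K.
    unfold dp1 in K. rewrite Cs in K. exact K.
  - pose proof (per_ext T p2 dp2 hT D2 E2 ltac:(unfold dp2; rewrite Ec, E1, E2, E3; auto) s) as K.
    unfold dp2 in K. rewrite Cs in K. exact K.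
  - pose proof (per_ext T p3 dp3 hT D3 E3 ltac:(unfold dp3; rewrite E2, E3; auto) s) as K.
    unfold dp3 in K. exact K.
Qed.

Lemma md_in s : 0 <= md T s <= T.
Proof. pose proof (md_spec T s hT). lra. Qed.

Lemma formt_upper s y v : formt s y v <= hmx * (y ^ 2 + v ^ 2).
Proof. apply (form_upper (md T s)). apply md_in. Qed.
Lemma formt_lower lam : (forall s y v, 0 <= s <= T -> lam * (y ^ 2 + v ^ 2) <= form s y v) ->
  forall s y v, lam * (y ^ 2 + v ^ 2) <= formt s y v.
Proof. intros Hl s y v. apply (Hl (md T s)). apply md_in. Qed.
Lemma Bt_bound s y v : Rabs (Pt2 s * y + Pt3 s * v) <= hmx * sqrt (y ^ 2 + v ^ 2).
Proof. apply (B_bound (md T s)). apply md_in. Qed.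

Lemma formt_der (Y V : R -> R) u w : is_derive Y u (V u) -> is_derive V u w ->
  is_derive (fun s => formt s (Y s) (V s)) u
   (- (Y u ^ 2 + V u ^ 2) + 2 * (Pt2 u * Y u + Pt3 u * V u) * (w + cc u * Y u + am * V u)).
Proof.
  intros DY DV. destruct (Pt_der u) as [D1 [D2 D3]].
  pose proof (Vder Pt1 Pt2 Pt3 Y V u _ _ _ _ D1 D2 D3 DY DV) as K1.
  unfold formt. 
  match type of K1 with is_derive _ _ ?val => replace (- (Y u ^ 2 + V u ^ 2) + 2 * (Pt2 u * Y u + Pt3 u * V u) * (w + cc u * Y u + am * V u)) with val end.
  exact K1. ring.
Qed.

Definition Sd := real (Lub_Rbar (fun r => exists t, 0 <= t /\ r = Rabs (dphi t * Derive f 0))).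
Definition eta := mu * Rabs dalpha + Rabs (dbeta * kk) * mu ^ 2 + mu * Sd.
Definition Qq Phi M := Rabs (beta + dbeta) * mu ^ 2 + mu * (Phi + M).
Definition eps0 := (1 - 2 * hmx * eta) / 2.
Definition r0 Phi M := Rmin rho (eps0 / (2 * hmx * Qq Phi M * p + 1)).
Definition cr := eps0 / hmx.
Definition qf t := (beta + dbeta) * mu ^ 2 + mu * (phi t + dphi t).

Hypothesis hsmall1 : mu * real (Lub_Rbar (fun r => exists t, 0 <= t /\ r = Rabs (dphi t * Derive f 0)))
             < 1 / (8 * hmax T H).
Hypothesis hp : 0 <= p.
Hypothesis hrho : 0 < rho.

Lemma Sd_bound M : (forall t, 0 <= t -> Rabs (dphi t) <= M) -> forall t, 0 <= t -> Rabs (dphi t * kk) <= Sd.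
Proof.
  intros HM t Ht. unfold Sd. apply lub_ub. exists t; auto.
  exists (M * Rabs kk). intros r [u [Hu ->]]. rewrite Rabs_mult. apply Rmult_le_compat_r.
  apply Rabs_pos. auto.
Qed.

Lemma eps0_pos M : (forall t, 0 <= t -> Rabs (dphi t) <= M) -> 1/4 < eps0.
Proof.
  intros HM. pose proof hmx_pos as Hh. pose proof hsmall1 as H1. pose proof hsmall2 as H2.
  fold Sd in H1. fold hmx in H1, H2. unfold eps0, eta.
  assert (E : hmx * (1 / (8 * hmx)) = 1/8) by (field; lra).
  assert (A1 : hmx * (mu * Sd) < hmx * (1 / (8 * hmx))) by (apply Rmult_lt_compat_l; auto).
  assert (A2 : hmx * (mu * (Rabs (dbeta * Derive f 0) * mu + Rabs dalpha)) < hmx * (1 / (8 * hmx)))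
    by (apply Rmult_lt_compat_l; auto).
  unfold kk. nra.
Qed.

Lemma qf_bound Phi M : (forall s, Rabs (phi s) <= Phi) -> (forall t, 0 <= t -> Rabs (dphi t) <= M) ->
  forall t, 0 <= t -> Rabs (qf t) <= Qq Phi M.
Proof.
  intros HP HM t Ht. unfold qf, Qq. eapply Rle_trans. apply Rabs_triang.
  rewrite !Rabs_mult. rewrite (Rabs_pos_eq mu) by lra. rewrite (Rabs_pos_eq (mu ^ 2)) by (apply pow_le; lra).
  apply Rplus_le_compat. lra. apply Rmult_le_compat_l. lra.
  eapply Rle_trans. apply Rabs_triang. pose proof (HP t). pose proof (HM t Ht). lra.
Qed.

Lemma Qq_nonneg Phi M : (forall s, Rabs (phi s) <= Phi) -> (forall t, 0 <= t -> Rabs (dphi t) <= M) ->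
  0 <= Qq Phi M.
Proof. intros HP HM. pose proof (qf_bound Phi M HP HM 0 (Rle_refl _)). pose proof (Rabs_pos (qf 0)). lra. Qed.

Lemma r0_pos Phi M : (forall s, Rabs (phi s) <= Phi) -> (forall t, 0 <= t -> Rabs (dphi t) <= M) ->
  0 < r0 Phi M.
Proof.
  intros HP HM. unfold r0. apply Rmin_glb_lt; auto. pose proof (eps0_pos M HM).
  pose proof (Qq_nonneg Phi M HP HM). pose proof hmx_pos.
  apply Rdiv_lt_0_compat. lra. pose proof (Rmult_le_pos _ _ (Rmult_le_pos _ _ (Rlt_le _ _ H2) H1) hp). lra.
Qed.

Lemma Ebound Phi M (G : R -> R) u y v N :
  (forall s, Rabs (phi s) <= Phi) -> (forall t, 0 <= t -> Rabs (dphi t) <= M) ->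
  (forall xi, Rabs xi <= rho -> Rabs (G xi - kk * xi) <= p * xi ^ 2) ->
  0 <= u -> Rabs y <= N -> Rabs v <= N -> N <= rho ->
  Rabs ((- ((alpha + dalpha) * mu) * v - qf u * G y) + cc u * y + am * v) <= eta * N + Qq Phi M * p * N ^ 2.
Proof.
  intros HP HM HG Hu Hy Hv HN.
  set (rr := G y - kk * y).
  assert (Hr : Rabs rr <= p * y ^ 2) by (apply HG; lra).
  replace ((- ((alpha + dalpha) * mu) * v - qf u * G y) + cc u * y + am * v) with
    ((- dalpha * mu) * v + (- (dbeta * kk * mu ^ 2 + mu * (dphi u * kk))) * y + (- qf u) * rr)
    by (unfold rr, qf, cc, am; ring).
  eapply Rle_trans. apply Rabs_triang. eapply Rle_trans. apply Rplus_le_compat_r. apply Rabs_triang.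
  rewrite !Rabs_mult, !Rabs_Ropp.
  pose proof (Sd_bound M HM u Hu) as HS.
  pose proof (qf_bound Phi M HP HM u Hu) as HQ.
  pose proof (Rabs_pos y). pose proof (Rabs_pos v). pose proof (Rabs_pos rr). pose proof (Rabs_pos (qf u)).
  assert (B1 : Rabs dalpha * Rabs mu * Rabs v <= mu * Rabs dalpha * N).
  { rewrite (Rabs_pos_eq mu) by lra. pose proof (Rabs_pos dalpha).
    assert (0 <= mu * Rabs dalpha) by (apply Rmult_le_pos; lra).
    replace (Rabs dalpha * mu * Rabs v) with ((mu * Rabs dalpha) * Rabs v) by ring.
    apply Rmult_le_compat_l; auto. }
  assert (B2 : Rabs (dbeta * kk * mu ^ 2 + mu * (dphi u * kk)) <= Rabs (dbeta * kk) * mu ^ 2 + mu * Sd).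
  { eapply Rle_trans. apply Rabs_triang. apply Rplus_le_compat.
    - rewrite (Rabs_mult (dbeta * kk) (mu ^ 2)), (Rabs_pos_eq (mu ^ 2)) by (apply pow_le; lra). lra.
    - rewrite (Rabs_mult mu), (Rabs_pos_eq mu) by lra. apply Rmult_le_compat_l; lra. }
  assert (B3 : Rabs (dbeta * kk * mu ^ 2 + mu * (dphi u * kk)) * Rabs y <= (Rabs (dbeta * kk) * mu ^ 2 + mu * Sd) * N).
  { apply Rmult_le_compat; auto. apply Rabs_pos. }
  assert (B4 : Rabs (qf u) * Rabs rr <= Qq Phi M * p * N ^ 2).
  { assert (y ^ 2 <= N ^ 2) by (rewrite <- Rsqr_pow2, <- Rsqr_pow2; rewrite Rsqr_abs; apply Rsqr_incr_1; lra).
    assert (Rabs rr <= p * N ^ 2) by nra.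
    replace (Qq Phi M * p * N ^ 2) with (Qq Phi M * (p * N ^ 2)) by ring.
    apply Rmult_le_compat; auto. }
  unfold eta. lra.
Qed.

Lemma lyap_main lam Phi M (G : R -> R)
  (Hlam : 0 < lam) (Hlf : forall s y v, 0 <= s <= T -> lam * (y ^ 2 + v ^ 2) <= form s y v)
  (HP : forall s, Rabs (phi s) <= Phi) (HM : forall t, 0 <= t -> Rabs (dphi t) <= M)
  (HG : forall xi, Rabs xi <= rho -> Rabs (G xi - kk * xi) <= p * xi ^ 2) :
  forall t0 t1 y v r1, 0 <= t0 -> 0 < r1 <= r0 Phi M ->
  is_sol ((alpha + dalpha) * mu) qf G t0 t1 y v ->
  hmx * (y t0 ^ 2 + v t0 ^ 2) < lam * r1 ^ 2 ->
  forall t, t0 <= t -> Rbar_lt t t1 ->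
  y t ^ 2 + v t ^ 2 < r1 ^ 2 /\
  lam * (y t ^ 2 + v t ^ 2) <= hmx * (y t0 ^ 2 + v t0 ^ 2) * exp (- (cr * (t - t0))).
Proof.
  intros t0 t1 y v r1 Ht0 Hr1 Hsol Hinit t Ht Htt1.
  pose proof hmx_pos as Hh. pose proof (eps0_pos M HM) as He0.
  pose proof (r0_pos Phi M HP HM) as Hr0. pose proof (Qq_nonneg Phi M HP HM) as HQ.
  assert (Hcr : 0 < cr) by (unfold cr; apply Rdiv_lt_0_compat; lra).
  set (wv := fun u => - ((alpha + dalpha) * mu) * v u - qf u * G (y u)).
  set (Ef := fun u => wv u + cc u * y u + am * v u).
  set (gf := fun u => formt u (y u) (v u) * exp (cr * (u - t0))).
  set (dgf := fun u => ((- (y u ^ 2 + v u ^ 2) + 2 * (Pt2 u * y u + Pt3 u * v u) * Ef u)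
                        + cr * formt u (y u) (v u)) * exp (cr * (u - t0))).
  assert (Hin : forall u, t0 <= u <= t -> Rbar_lt u t1).
  { intros u Hu. eapply Rbar_le_lt_trans; [|exact Htt1]. simpl. lra. }
  assert (Hder : forall u, t0 <= u <= t -> is_derive gf u (dgf u)).
  { intros u Hu. destruct (Hsol u ltac:(lra) (Hin u Hu)) as [DY DV].
    unfold gf, dgf, Ef. apply (expder (fun s => formt s (y s) (v s))).
    apply formt_der; auto. }
  assert (Hlow : forall u, lam * (y u ^ 2 + v u ^ 2) <= formt u (y u) (v u)) by (intros; apply formt_lower; auto).
  assert (Hexp1 : forall u, t0 <= u -> 1 <= exp (cr * (u - t0))).
  { intros u Hu. rewrite <- exp_0. destruct (Req_dec (cr * (u - t0)) 0) as [E|E]. rewrite E; lra.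
    left. apply exp_increasing. assert (0 <= cr * (u - t0)) by (apply Rmult_le_pos; lra). lra. }
  set (B := lam * r1 ^ 2).
  assert (Hregion : forall u, t0 <= u -> gf u < B -> y u ^ 2 + v u ^ 2 < r1 ^ 2).
  { intros u Hu Hg. unfold gf in Hg. pose proof (Hexp1 u Hu). pose proof (Hlow u).
    pose proof (pow2_ge_0 (y u)). pose proof (pow2_ge_0 (v u)).
    assert (0 <= formt u (y u) (v u)) by nra.
    assert (formt u (y u) (v u) <= formt u (y u) (v u) * exp (cr * (u - t0))) by nra.
    unfold B in Hg. nra. }
  assert (Hg0 : gf t0 <= hmx * (y t0 ^ 2 + v t0 ^ 2)).
  { unfold gf. replace (t0 - t0) with 0 by ring. rewrite Rmult_0_r, exp_0, Rmult_1_r. apply formt_upper. }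
  assert (Hmain : gf t <= gf t0).
  { apply (cont_ind gf dgf t0 t B); auto.
    - intros x Hx. apply pt_of_cont. apply cder. eexists. apply Hder. auto.
    - intros x Hx. apply Hder. lra.
    - intros x Hx Hgx. pose proof (Hregion x ltac:(lra) Hgx) as Hn.
      unfold dgf. cut ((- (y x ^ 2 + v x ^ 2) + 2 * (Pt2 x * y x + Pt3 x * v x) * Ef x) + cr * formt x (y x) (v x) <= 0).
      { intros. pose proof (exp_pos (cr * (x - t0))). nra. }
      set (N := sqrt (y x ^ 2 + v x ^ 2)).
      assert (HN2 : N ^ 2 = y x ^ 2 + v x ^ 2).
      { unfold N. rewrite pow2_sqrt; auto. pose proof (pow2_ge_0 (y x)). pose proof (pow2_ge_0 (v x)). lra. }
      assert (HN0 : 0 <= N) by apply sqrt_pos.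
      assert (HNr : N < r1) by (destruct (Rlt_le_dec N r1) as [ok|bad]; auto; exfalso; nra).
      assert (HNr0 : N <= r0 Phi M) by lra.
      assert (Hr0rho : r0 Phi M <= rho) by (unfold r0; apply Rmin_l).
      assert (Hy : Rabs (y x) <= N).
      { apply sq_abs_le. pose proof (pow2_ge_0 (v x)). lra. auto. }
      assert (Hv : Rabs (v x) <= N).
      { apply sq_abs_le. pose proof (pow2_ge_0 (y x)). lra. auto. }
      pose proof (Ebound Phi M G x (y x) (v x) N HP HM HG ltac:(lra) Hy Hv ltac:(lra)) as HE.
      fold (wv x) in HE. fold (Ef x) in HE.
      pose proof (Bt_bound x (y x) (v x)) as HB. fold N in HB.
      assert (HBE : Rabs (2 * (Pt2 x * y x + Pt3 x * v x) * Ef x) <= 2 * (hmx * N) * (eta * N + Qq Phi M * p * N ^ 2)).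
      { rewrite !Rabs_mult. rewrite Rabs_pos_eq by lra. apply Rmult_le_compat.
        pose proof (Rabs_pos (Pt2 x * y x + Pt3 x * v x)). lra. apply Rabs_pos. lra. auto. }
      assert (Hsm : 2 * hmx * Qq Phi M * p * r0 Phi M <= eps0).
      { assert (Hm : r0 Phi M <= eps0 / (2 * hmx * Qq Phi M * p + 1)) by (unfold r0; apply Rmin_r).
        set (X := 2 * hmx * Qq Phi M * p) in *.
        assert (0 <= X) by (unfold X; apply Rmult_le_pos; [apply Rmult_le_pos|]; lra).
        assert (X * r0 Phi M <= X * (eps0 / (X + 1))) by (apply Rmult_le_compat_l; auto).
        assert (X * (eps0 / (X + 1)) <= eps0).
        { apply (Rmult_le_reg_r (X + 1)). lra. field_simplify; nra. }
        lra. }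
      assert (HcubeN : 2 * hmx * Qq Phi M * p * N ^ 3 <= eps0 * N ^ 2).
      { assert (0 <= 2 * hmx * Qq Phi M * p) by (apply Rmult_le_pos; [apply Rmult_le_pos|]; lra).
        assert (2 * hmx * Qq Phi M * p * N <= eps0) by nra.
        replace (2 * hmx * Qq Phi M * p * N ^ 3) with ((2 * hmx * Qq Phi M * p * N) * N ^ 2) by ring.
        apply Rmult_le_compat_r. apply pow2_ge_0. auto. }
      assert (Hform : cr * formt x (y x) (v x) <= eps0 * N ^ 2).
      { pose proof (formt_upper x (y x) (v x)) as HU. rewrite <- HN2 in HU.
        unfold cr. replace (eps0 * N ^ 2) with (eps0 / hmx * (hmx * N ^ 2)) by (field; lra).
        apply Rmult_le_compat_l. left; apply Rdiv_lt_0_compat; lra. auto. }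
      pose proof (Rle_abs (2 * (Pt2 x * y x + Pt3 x * v x) * Ef x)).
      assert (Heta : 2 * hmx * eta = 1 - 2 * eps0) by (unfold eps0; field).
      replace (2 * (hmx * N) * (eta * N + Qq Phi M * p * N ^ 2)) with
        ((2 * hmx * eta) * N ^ 2 + 2 * hmx * Qq Phi M * p * N ^ 3) in HBE by ring.
      rewrite Heta in HBE. rewrite <- HN2. nra.
    - unfold B. eapply Rle_lt_trans; [exact Hg0| exact Hinit]. }
  split.
  - apply Hregion; auto. eapply Rle_lt_trans. exact Hmain. eapply Rle_lt_trans. exact Hg0. exact Hinit.
  - pose proof (Hlow t). pose proof (Rle_trans _ _ _ Hmain Hg0) as Hm2. unfold gf in Hm2.
    assert (Hex : exp (cr * (t - t0)) * exp (- (cr * (t - t0))) = 1).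
    { rewrite <- exp_plus. replace (cr * (t - t0) + - (cr * (t - t0))) with 0 by ring. apply exp_0. }
    pose proof (exp_pos (- (cr * (t - t0)))).
    assert (formt t (y t) (v t) = formt t (y t) (v t) * exp (cr * (t - t0)) * exp (- (cr * (t - t0)))).
    { rewrite Rmult_assoc, Hex. ring. }
    assert (formt t (y t) (v t) * exp (cr * (t - t0)) * exp (- (cr * (t - t0))) <=
            hmx * (y t0 ^ 2 + v t0 ^ 2) * exp (- (cr * (t - t0)))).
    { apply Rmult_le_compat_r. lra. lra. }
    lra.
Qed.
End Main.

Definition clamp (rho x : R) := Rmax (- rho) (Rmin rho x).

Lemma clamp_in rho x : 0 < rho -> - rho <= clamp rho x <= rho.
Proof. intros. unfold clamp, Rmax, Rmin. repeat destruct Rle_dec; lra. Qed.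
Lemma clamp_id rho x : Rabs x <= rho -> clamp rho x = x.
Proof. intros Hx. apply Rabs_le_between in Hx. unfold clamp, Rmax, Rmin. repeat destruct Rle_dec; lra. Qed.
Lemma clamp_lip rho x y : 0 < rho -> Rabs (clamp rho x - clamp rho y) <= Rabs (x - y).
Proof. intros. unfold clamp, Rmax, Rmin. repeat destruct Rle_dec; unfold Rabs; repeat destruct Rcase_abs; lra. Qed.

Lemma f_lip (f : R -> R) rho : 0 < rho -> (forall n x, ex_derive_n f n x) ->
  exists Lf, forall a b, Rabs (f (clamp rho a) - f (clamp rho b)) <= Lf * Rabs (a - b).
Proof.
  intros Hrho Hs.
  assert (Hd : forall x, is_derive f x (Derive f x)).
  { intros x. apply Derive_correct. exact (Hs 1%nat x). }
  assert (Hdc : forall x, continuous (Derive f) x).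
  { intros x. apply cder. exact (Hs 2%nat x). }
  destruct (continuity_ab_maj (fun x => Rabs (Derive f x)) (- rho) rho ltac:(lra)) as [xm [Hxm _]].
  { intros c _. apply pt_of_cont. apply cabs. auto. }
  exists (Rabs (Derive f xm)). intros a b.
  set (a' := clamp rho a). set (b' := clamp rho b).
  assert (Ha := clamp_in rho a Hrho). assert (Hb := clamp_in rho b Hrho). fold a' in Ha. fold b' in Hb.
  destruct (MVT_gen f b' a' (Derive f)) as [c [Hc Heq]].
  - intros x _. apply Hd.
  - intros x _. apply pt_of_cont. apply cder. eexists. apply Hd.
  - rewrite Heq. rewrite Rabs_mult.
    assert (Hcr : - rho <= c <= rho).
    { unfold Rmin, Rmax in Hc. destruct Rle_dec; lra. }
    pose proof (Hxm c Hcr). pose proof (clamp_lip rho a b Hrho). fold a' b' in H0.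
    apply Rmult_le_compat; try apply Rabs_pos; auto.
Qed.

Lemma rmax_lip t u : Rabs (Rmax 0 u - Rmax 0 t) <= Rabs (u - t).
Proof. unfold Rmax. repeat destruct Rle_dec; unfold Rabs; repeat destruct Rcase_abs; lra. Qed.

Lemma dphi_ext_cont (dphi : R -> R) :
  (forall t, 0 <= t -> filterlim dphi (within (fun s => 0 <= s) (locally t)) (locally (dphi t))) ->
  forall t, continuous (fun u => dphi (Rmax 0 u)) t.
Proof.
  intros Hc t. apply cont_of_pt. apply continuity_pt_locally. intros eps.
  assert (H0 : 0 <= Rmax 0 t) by apply Rmax_l.
  specialize (Hc _ H0). 
  assert (Hb : locally (dphi (Rmax 0 t)) (fun z => Rabs (z - dphi (Rmax 0 t)) < eps)).
  { exists eps. intros z Hz. apply ballR in Hz. auto. }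
  specialize (Hc _ Hb). destruct Hc as [d Hd].
  exists d. intros u Hu. apply ballR in Hu. apply Hd.
  apply ballR'. eapply Rle_lt_trans. apply rmax_lip. auto. apply Rmax_l.
Qed.

Lemma snorm_small (h lam r1 y0 v0 : R) : 0 < h -> 0 < lam -> 0 <= r1 ->
  snorm y0 v0 < sqrt (lam / h) * r1 -> h * (y0 ^ 2 + v0 ^ 2) < lam * r1 ^ 2.
Proof.
  intros Hh Hl Hr Hs. unfold snorm in Hs.
  pose proof (sqrt_pos (y0 ^ 2 + v0 ^ 2)).
  assert (Hnn : 0 <= y0 ^ 2 + v0 ^ 2) by (pose proof (pow2_ge_0 y0); pose proof (pow2_ge_0 v0); lra).
  assert (Hsq : (sqrt (y0 ^ 2 + v0 ^ 2)) ^ 2 < (sqrt (lam / h) * r1) ^ 2).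
  { nra. }
  rewrite pow2_sqrt in Hsq by auto. rewrite Rpow_mult_distr, pow2_sqrt in Hsq.
  2:{ left. apply Rdiv_lt_0_compat; auto. }
  apply (Rmult_lt_compat_l h) in Hsq; auto.
  replace (h * (lam / h * r1 ^ 2)) with (lam * r1 ^ 2) in Hsq by (field; lra). auto.
Qed.

Lemma snorm_lt y v e : 0 < e -> y ^ 2 + v ^ 2 < e ^ 2 -> snorm y v < e.
Proof.
  intros He Hs. unfold snorm. rewrite <- (sqrt_pow2 e) by lra. apply sqrt_lt_1_alt.
  split; auto. pose proof (pow2_ge_0 y); pose proof (pow2_ge_0 v); lra.
Qed.

Theorem mainTheorem8
  (T alpha beta : R) (phi f : R -> R) (mu0 mu p rho dalpha dbeta : R) (dphi : R -> R)
  (H : R -> M2)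
  (hT : 0 < T) (halpha : 0 < alpha) (hbeta : 0 < beta)
  (hphi_cont : forall t, continuous phi t)
  (hphi_per : forall t, phi (t + T) = phi t)
  (hphi_mean : RInt phi 0 T = 0)
  (hf_smooth : forall n x, ex_derive_n f n x)
  (hf0 : f 0 = 0) (hf'0 : Derive f 0 < 0)
  (hcond : (1 / T) * RInt (fun tau => (RInt (fun s => phi s * Derive f 0) 0 tau) ^ 2) 0 T
           > ((1 / T) * RInt (fun tau => tau * (phi tau * Derive f 0)) 0 T) ^ 2
             - beta * Derive f 0)
  (hmu0 : 0 < mu0)
  (hlin : forall m, 0 < m <= mu0 ->
     zero_asympt_stable (alpha * m)
       (fun t => beta * Derive f 0 * m ^ 2 + m * (phi t * Derive f 0)) (fun x => x))
  (hmu : 0 < mu <= mu0)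
  (hH : lyap_periodic_sol T alpha (beta * Derive f 0) (fun t => phi t * Derive f 0) mu H)
  (hdphi_cont : forall t, 0 <= t ->
     filterlim dphi (within (fun s => 0 <= s) (locally t)) (locally (dphi t)))
  (hdphi_bdd : exists M, forall t, 0 <= t -> Rabs (dphi t) <= M)
  (hp : 0 <= p) (hrho : 0 < rho)
  (hf_quad : forall xi, Rabs xi <= rho -> Rabs (f xi - Derive f 0 * xi) <= p * xi ^ 2)
  (hsmall1 : mu * real (Lub_Rbar (fun r => exists t, 0 <= t /\ r = Rabs (dphi t * Derive f 0)))
             < 1 / (8 * hmax T H))
  (hsmall2 : mu * (Rabs (dbeta * Derive f 0) * mu + Rabs dalpha) < 1 / (8 * hmax T H)) :
  zero_asympt_stable ((alpha + dalpha) * mu)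
    (fun t => (beta + dbeta) * mu ^ 2 + mu * (phi t + dphi t)) f.
Proof.
  destruct hmu as [hmu' _].
  destruct (lam_exists T alpha beta phi f mu H hT hphi_cont hphi_per hmu' hH) as [lam [Hlam Hlf]].
  destruct (phi_bound T phi hT hphi_cont hphi_per) as [Phi HP].
  destruct hdphi_bdd as [M HM].
  destruct (f_lip f rho hrho hf_smooth) as [Lf HLf].
  pose proof (r0_pos T beta phi f mu p rho dalpha dbeta dphi H hmu' hsmall2 hsmall1 hp hrho Phi M HP HM) as Hr0.
  set (R0 := r0 T beta f mu p rho dalpha dbeta dphi H Phi M) in *.
  assert (HR0rho : R0 <= rho) by (unfold R0, r0; apply Rmin_l).
  pose proof (hmx_pos T f mu dalpha dbeta H hmu' hsmall2) as Hh.
  set (h := hmx T H) in *.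
  pose proof (eps0_pos T f mu dalpha dbeta dphi H hmu' hsmall2 hsmall1 M HM) as He0.
  assert (Hcr : 0 < cr T f mu dalpha dbeta dphi H) by (unfold cr; apply Rdiv_lt_0_compat; fold h; lra).
  set (crr := cr T f mu dalpha dbeta dphi H) in *.
  pose proof (lyap_main T alpha beta phi f mu p rho dalpha dbeta dphi H hT hphi_per hmu' hH hsmall2 hsmall1 hp hrho lam Phi M) as LM.
  fold h crr in LM.
  set (fh := fun x => f (clamp rho x)).
  assert (HGf : forall xi, Rabs xi <= rho -> Rabs (f xi - kk f * xi) <= p * xi ^ 2) by exact hf_quad.
  assert (HGh : forall xi, Rabs xi <= rho -> Rabs (fh xi - kk f * xi) <= p * xi ^ 2).
  { intros xi Hxi. unfold fh. rewrite clamp_id by auto. auto. }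
  assert (Hex : forall t0 y0 v0 r1, 0 <= t0 -> 0 < r1 <= R0 -> h * (y0 ^ 2 + v0 ^ 2) < lam * r1 ^ 2 ->
    exists y v, is_sol ((alpha + dalpha) * mu) (fun t => (beta + dbeta) * mu ^ 2 + mu * (phi t + dphi t)) f t0 p_infty y v
      /\ y t0 = y0 /\ v t0 = v0).
  { intros t0 y0 v0 r1 Ht0 Hr1 Hin.
    set (qh := fun t => (beta + dbeta) * mu ^ 2 + mu * (phi t + dphi (Rmax 0 t))).
    assert (Hqc : forall t, continuous qh t).
    { intros t. unfold qh. apply cplus. apply cconst. apply cmult. apply cconst. apply cplus. auto.
      apply dphi_ext_cont. auto. }
    assert (Hqb : forall t, Rabs (qh t) <= Rabs (beta + dbeta) * mu ^ 2 + mu * (Phi + M)).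
    { intros t. unfold qh. eapply Rle_trans. apply Rabs_triang.
      rewrite !Rabs_mult. rewrite (Rabs_pos_eq mu) by lra. rewrite (Rabs_pos_eq (mu ^ 2)) by (apply pow_le; lra).
      apply Rplus_le_compat. lra. apply Rmult_le_compat_l. lra.
      eapply Rle_trans. apply Rabs_triang. pose proof (HP t). pose proof (HM (Rmax 0 t) (Rmax_l _ _)). lra. }
    destruct (picard ((alpha + dalpha) * mu) _ Lf t0 y0 v0 qh fh Hqc Hqb HLf) as [Y [V [HD [HY0 HV0]]]].
    assert (Hsolh : is_sol ((alpha + dalpha) * mu) (qf beta phi mu dbeta dphi) fh t0 p_infty Y V).
    { intros t Ht _. destruct (HD t) as [D1 D2]. split; auto.
      unfold qf. replace (dphi t) with (dphi (Rmax 0 t)). exact D2. rewrite Rmax_right; auto. lra. }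
    exists Y, V. split; [|split; auto].
    intros t Ht _. destruct (Hsolh t Ht I) as [D1 D2]. split; auto.
    destruct (LM fh Hlam Hlf HP HM HGh t0 p_infty Y V r1 Ht0 Hr1 Hsolh ltac:(rewrite HY0, HV0; auto) t Ht I) as [Hn _].
    assert (HY : Rabs (Y t) <= rho).
    { apply sq_abs_le. pose proof (pow2_ge_0 (V t)). assert (r1 ^ 2 <= rho ^ 2) by (apply pow_incr; lra). lra. lra. }
    unfold fh in D2. rewrite clamp_id in D2 by auto. exact D2. }
  split.
  - intros t0 Ht0 eps Heps.
    set (r1 := Rmin R0 eps).
    assert (Hr1 : 0 < r1 <= R0) by (split; [apply Rmin_glb_lt; lra | apply Rmin_l]).
    exists (sqrt (lam / h) * r1). split.
    { apply Rmult_lt_0_compat. apply sqrt_lt_R0. apply Rdiv_lt_0_compat; lra. lra. }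
    split.
    + intros y0 v0 Hs. apply (Hex t0 y0 v0 r1); auto. apply snorm_small; auto; lra.
    + intros t1 y v Hsol Hs t Ht Htt.
      destruct (LM f Hlam Hlf HP HM HGf t0 t1 y v r1 Ht0 Hr1 Hsol (snorm_small h lam r1 _ _ Hh Hlam ltac:(lra) Hs) t Ht Htt) as [Hn _].
      apply snorm_lt; auto. assert (r1 ^ 2 <= eps ^ 2) by (apply pow_incr; split; [lra|apply Rmin_r]). lra.
  - intros t0 Ht0. exists (sqrt (lam / h) * R0). split.
    { apply Rmult_lt_0_compat. apply sqrt_lt_R0. apply Rdiv_lt_0_compat; lra. lra. }
    intros y v Hsol Hs.
    pose proof (snorm_small h lam R0 _ _ Hh Hlam ltac:(lra) Hs) as Hin.
    set (n0 := y t0 ^ 2 + v t0 ^ 2) in *.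
    apply is_lim_spec. intros eps. simpl.
    set (A := h * n0 + 1).
    assert (HA : 0 < A) by (unfold A; unfold n0; pose proof (pow2_ge_0 (y t0)); pose proof (pow2_ge_0 (v t0)); nra).
    pose proof (cond_pos eps) as Hep.
    assert (HB : 0 < lam * eps ^ 2 / A) by (apply Rdiv_lt_0_compat; [apply Rmult_lt_0_compat; [lra|apply pow_lt; lra]|lra]).
    exists (Rmax t0 (t0 - ln (lam * eps ^ 2 / A) / crr)). intros t Ht.
    assert (Ht1 := Rle_lt_trans _ _ _ (Rmax_l _ _) Ht).
    assert (Ht2 := Rle_lt_trans _ _ _ (Rmax_r _ _) Ht).
    destruct (LM f Hlam Hlf HP HM HGf t0 p_infty y v R0 Ht0 (conj Hr0 (Rle_refl _)) Hsol Hin t ltac:(lra) I) as [_ Hb].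
    assert (Hexp : exp (- (crr * (t - t0))) < lam * eps ^ 2 / A).
    { rewrite <- (exp_ln (lam * eps ^ 2 / A)) by auto. apply exp_increasing.
      assert (- ln (lam * eps ^ 2 / A) / crr < t - t0) by lra.
      apply (Rmult_lt_compat_l crr) in H0; auto.
      replace (crr * (- ln (lam * eps ^ 2 / A) / crr)) with (- ln (lam * eps ^ 2 / A)) in H0 by (field; lra).
      lra. }
    pose proof (exp_pos (- (crr * (t - t0)))). fold n0 in Hb.
    assert (h * n0 * exp (- (crr * (t - t0))) <= A * exp (- (crr * (t - t0)))).
    { apply Rmult_le_compat_r; unfold A; lra. }
    assert (A * exp (- (crr * (t - t0))) < lam * eps ^ 2).
    { apply (Rmult_lt_compat_l A) in Hexp; auto.
      replace (A * (lam * eps ^ 2 / A)) with (lam * eps ^ 2) in Hexp by (field; lra). auto. }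
    assert (Hn : y t ^ 2 + v t ^ 2 < eps ^ 2).
    { assert (lam * (y t ^ 2 + v t ^ 2) < lam * eps ^ 2) by lra.
      apply Rmult_lt_reg_l in H3; auto. }
    rewrite Rminus_0_r. rewrite Rabs_pos_eq by (unfold snorm; apply sqrt_pos).
    apply snorm_lt; auto.
Qed.
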